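(* Let $(\phi_n)_{n\ge1}$ be a sequence of inner functions satisfying $\phi_n(0) \neq 0$, and let $f_n = T(\phi_n)$. The following are equivalent: (a) the product $\prod_{n \geq 1} \phi_n(0)$ converges absolutely; (b) the product $\prod_{n \geq 1} \phi_n$ converges absolutely and locally uniformly on $\mathbb{D}$; (c) the product $\prod_{n \geq 1} f_n(0)$ converges absolutely; (d) the product $\prod_{n \geq 1} f_n$ converges absolutely and locally uniformly on $\mathbb{D}$.
   Context: $\mathbb{D}$ is the open unit disk. $T(z) = i\frac{1-iz}{1+iz}$, and $T(\phi)=T\circ\phi$ (it is implicitly assumed that no $\phi_n$ is the constant $i$, so that $f_n$ is defined). A product $\prod w_n$ of numbers converges absolutely if $\sum|1-w_n|<\infty$; a product of functions converges absolutely and locally uniformly on $\mathbb{D}$ if $\sum|1-w_n(z)|$ converges uniformly on compact subsets of $\mathbb{D}$. *)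

(* Defs.v *)
From Stdlib Require Import Reals.
From Coquelicot Require Import Coquelicot.

Open Scope R_scope.

Definition in_disk (z : C) : Prop := Cmod z < 1.

Definition holomorphic_on_disk (f : C -> C) : Prop :=
  forall z : C, in_disk z -> ex_derive (K := C_AbsRing) (V := C_NormedModule) f z.

Definition null_set (N : R -> Prop) : Prop :=
  forall eps : R, 0 < eps ->
    exists a b : nat -> R,
      (forall n, a n <= b n) /\
      (forall t, N t -> exists n, a n < t < b n) /\
      (forall m, sum_f_R0 (fun n => b n - a n) m <= eps).

Definition circ (t : R) : C := (cos t, sin t).

Definition unimodular_radial_limit (f : C -> C) (t : R) : Prop :=
  exists l : C, Cmod l = 1 /\
    filterlim (fun r : R => f (Cmult (RtoC r) (circ t))) (at_left 1) (locally l).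

Definition inner (f : C -> C) : Prop :=
  holomorphic_on_disk f /\
  (forall z, in_disk z -> Cmod (f z) <= 1) /\
  null_set (fun t => 0 <= t < 2 * PI /\ ~ unimodular_radial_limit f t).

Definition T (z : C) : C :=
  Cdiv (Cmult Ci (Cminus 1 (Cmult Ci z))) (Cplus 1 (Cmult Ci z)).

Definition prod_abs_conv (w : nat -> C) : Prop :=
  ex_series (fun n => Cmod (Cminus 1 (w n))).

(* Absolute and locally uniform convergence on D of a product of functions:
   sum |1 - w_n(z)| converges uniformly on compact subsets of D
   (equivalently, on every closed disk |z| <= r with r < 1). *)
Definition prod_abs_loc_unif_conv (w : nat -> C -> C) : Prop :=
  forall r : R, 0 <= r < 1 ->
    exists g : C -> R,
      forall eps : R, 0 < eps ->
        exists N0 : nat, forall N : nat, (N0 <= N)%nat ->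
          forall z : C, Cmod z <= r ->
            Rabs (sum_f_R0 (fun n => Cmod (Cminus 1 (w n z))) N - g z) < eps.

(* Main.v *)
Require Import Defs.
From Stdlib Require Import Reals Lra Lia ZArith.
From Coquelicot Require Import Coquelicot.
Open Scope R_scope.

Lemma C_derive_eps (f : C -> C) z l :
  is_derive (K:=C_AbsRing) (V:=C_NormedModule) f z l ->
  forall eps, 0 < eps -> exists del, 0 < del /\ forall w, Cmod (w - z) < del ->
    Cmod (f w - f z - l * (w - z))%C <= eps * Cmod (w - z).
Proof.
  intros [_ Hd] eps Heps.
  assert (H := Hd z (fun P H => H) (mkposreal eps Heps)).
  apply (locally_le_locally_norm (K:=C_AbsRing) (V:=AbsRing_NormedModule C_AbsRing)) in H.
  destruct H as [d Hd']. exists d. split. apply cond_pos.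
  intros w Hw. specialize (Hd' w).
  unfold ball_norm in Hd'. simpl in Hd'.
  rewrite (Cmult_comm l). exact (Hd' Hw).
Qed.

Lemma C_eps_derive (f : C -> C) z l :
  (forall eps, 0 < eps -> exists del, 0 < del /\ forall w, Cmod (w - z) < del ->
    Cmod (f w - f z - l * (w - z))%C <= eps * Cmod (w - z)) ->
  is_derive (K:=C_AbsRing) (V:=C_NormedModule) f z l.
Proof.
  intros H. split.
  - apply is_linear_scal_l.
  - intros x Hx. apply (is_filter_lim_locally_unique (K:=C_AbsRing) (V:=AbsRing_NormedModule C_AbsRing)) in Hx. subst x.
    intros eps. apply (locally_le_locally_norm (K:=C_AbsRing) (V:=AbsRing_NormedModule C_AbsRing)).
    destruct (H eps (cond_pos eps)) as [d [Hd1 Hd2]].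
    exists (mkposreal d Hd1). intros w Hw.
    pose proof (Hd2 w Hw) as K. rewrite (Cmult_comm l) in K. exact K.
Qed.

Lemma Cmod_le_sum a b : Cmod (a, b) <= Rabs a + Rabs b.
Proof.
  unfold Cmod; simpl. rewrite <- (sqrt_Rsqr (Rabs a + Rabs b)).
  2: { pose proof (Rabs_pos a); pose proof (Rabs_pos b); lra. }
  apply sqrt_le_1_alt. unfold Rsqr.
  pose proof (Rabs_pos a); pose proof (Rabs_pos b).
  pose proof (Rsqr_abs a); pose proof (Rsqr_abs b). unfold Rsqr in *. nra.
Qed.

Lemma Cmod_sq (h : C) : Cmod h ^ 2 = fst h ^ 2 + snd h ^ 2.
Proof.
  destruct h as [a b]. unfold Cmod; simpl. rewrite !Rmult_1_r. apply sqrt_sqrt.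
  nra.
Qed.

Lemma Cmod_fst (h : C) : Rabs (fst h) <= Cmod h.
Proof. pose proof (Rmax_Cmod h). pose proof (Rmax_l (Rabs (fst h)) (Rabs (snd h))). lra. Qed.
Lemma Cmod_snd (h : C) : Rabs (snd h) <= Cmod h.
Proof. pose proof (Rmax_Cmod h). pose proof (Rmax_r (Rabs (fst h)) (Rabs (snd h))). lra. Qed.

Lemma exp_le3 c : c <= 1 -> exp c <= 3.
Proof.
  intros H. destruct (Rle_lt_or_eq_dec _ _ H).
  - pose proof (exp_increasing _ _ r). pose proof exp_le_3. lra.
  - subst. apply exp_le_3.
Qed.

Lemma mvt_bound (f f' : R -> R) a M :
  (forall c, derivable_pt_lim f c (f' c)) ->
  (forall c, Rabs c <= Rabs a -> Rabs (f' c) <= M) ->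
  Rabs (f a - f 0) <= M * Rabs a.
Proof.
  intros Hd Hb. destruct (MVT_abs f f' 0 a) as [c [Hc1 Hc2]].
  { intros; apply Hd. }
  rewrite Hc1. rewrite Rminus_0_r. apply Rmult_le_compat_r. apply Rabs_pos.
  apply Hb. unfold Rmin, Rmax in Hc2. destruct (Rle_dec 0 a).
  - rewrite !Rabs_pos_eq; lra.
  - rewrite !Rabs_left1; lra.
Qed.

Lemma sin_abs_le b : Rabs (sin b) <= Rabs b.
Proof.
  replace (sin b) with (sin b - sin 0) by (rewrite sin_0; ring).
  rewrite <- (Rmult_1_l (Rabs b)).
  apply (mvt_bound sin cos). intros; apply derivable_pt_lim_sin.
  intros c _. apply Rabs_le. apply COS_bound.
Qed.

Lemma cos_m1_le b : Rabs (cos b - 1) <= b ^ 2.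
Proof.
  replace (cos b - 1) with (cos b - cos 0) by (rewrite cos_0; ring).
  replace (b^2) with (Rabs b * Rabs b) by (rewrite <- Rabs_mult; rewrite Rabs_pos_eq; nra).
  apply (mvt_bound cos (fun x => - sin x)). intros; apply derivable_pt_lim_cos.
  intros c Hc. rewrite Rabs_Ropp. eapply Rle_trans. apply sin_abs_le. exact Hc.
Qed.

Lemma sin_m_le b : Rabs b <= 1 -> Rabs (sin b - b) <= b ^ 2.
Proof.
  intros Hb.
  replace (sin b - b) with ((sin b - b) - (sin 0 - 0)) by (rewrite sin_0; ring).
  replace (b^2) with (Rabs b * Rabs b) by (rewrite <- Rabs_mult; rewrite Rabs_pos_eq; nra).
  apply (mvt_bound (fun x => sin x - x) (fun x => cos x - 1)).
  intros c. apply derivable_pt_lim_minus. apply derivable_pt_lim_sin. apply derivable_pt_lim_id.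
  intros c Hc. eapply Rle_trans. apply cos_m1_le.
  pose proof (Rabs_pos c). replace (c^2) with (Rabs c * Rabs c) by (rewrite <- Rabs_mult; rewrite Rabs_pos_eq; nra).
  nra.
Qed.

Lemma exp_m1_le a : Rabs a <= 1 -> Rabs (exp a - 1) <= 3 * Rabs a.
Proof.
  intros Ha. replace (exp a - 1) with (exp a - exp 0) by (rewrite exp_0; ring).
  apply (mvt_bound exp exp). intros; apply derivable_pt_lim_exp.
  intros c Hc. rewrite Rabs_pos_eq by (left; apply exp_pos). apply exp_le3.
  pose proof (Rle_abs c). lra.
Qed.

Lemma exp_m1a_le a : Rabs a <= 1 -> Rabs (exp a - 1 - a) <= 3 * a ^ 2.
Proof.
  intros Ha. replace (exp a - 1 - a) with ((exp a - 1 - a) - (exp 0 - 1 - 0)) by (rewrite exp_0; ring).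
  replace (3 * a^2) with ((3 * Rabs a) * Rabs a) by (rewrite Rmult_assoc, <- Rabs_mult; rewrite Rabs_pos_eq; nra).
  apply (mvt_bound (fun x => exp x - 1 - x) (fun x => exp x - 1)).
  intros c. replace (exp c - 1) with (exp c - 0 - 1) by ring.
  apply derivable_pt_lim_minus. apply derivable_pt_lim_minus. apply derivable_pt_lim_exp.
  apply derivable_pt_lim_const. apply derivable_pt_lim_id.
  intros c Hc. eapply Rle_trans. apply exp_m1_le. lra. lra.
Qed.

Definition Ex (z : C) : C := (exp (fst z) * cos (snd z), exp (fst z) * sin (snd z)).

Lemma Ex_plus z h : Ex (z + h)%C = (Ex z * Ex h)%C.
Proof.
  destruct z as [x y]; destruct h as [a b]. unfold Ex; simpl.
  rewrite exp_plus, cos_plus, sin_plus. unfold Cmult; simpl. f_equal; ring.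
Qed.

Lemma Cmod_Ex z : Cmod (Ex z) = exp (fst z).
Proof.
  unfold Ex, Cmod; simpl.
  replace (exp (fst z) * cos (snd z) * (exp (fst z) * cos (snd z) * 1) +
   exp (fst z) * sin (snd z) * (exp (fst z) * sin (snd z) * 1)) with
    (exp (fst z) * exp (fst z)) .
  apply sqrt_square. left; apply exp_pos.
  pose proof (sin2_cos2 (snd z)). unfold Rsqr in H. nra.
Qed.

Lemma Ex_small h : Cmod h <= 1 -> Cmod (Ex h - 1 - h)%C <= 6 * Cmod h ^ 2.
Proof.
  intros Hh. destruct h as [a b].
  pose proof (Cmod_fst (a,b)) as Ha; pose proof (Cmod_snd (a,b)) as Hb; simpl in Ha, Hb.
  rewrite Cmod_sq; simpl.
  assert (E : (Ex (a,b) - 1 - (a,b))%C = ((exp a - 1 - a) + exp a * (cos b - 1), (exp a - 1) * sin b + (sin b - b))).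
  { unfold Ex, Cminus, Cplus, Copp; simpl; f_equal; ring. }
  rewrite E. eapply Rle_trans. apply Cmod_le_sum.
  assert (A1 := exp_m1a_le a ltac:(lra)).
  assert (A2 := exp_m1_le a ltac:(lra)).
  assert (A3 := cos_m1_le b).
  assert (A4 := sin_m_le b ltac:(lra)).
  assert (A5 := sin_abs_le b).
  assert (A6 : exp a <= 3) by (apply exp_le3; pose proof (Rle_abs a); lra).
  pose proof (exp_pos a).
  eapply Rle_trans. apply Rplus_le_compat; apply Rabs_triang.
  rewrite Rabs_mult, Rabs_mult. rewrite (Rabs_pos_eq (exp a)) by lra.
  pose proof (Rabs_pos (cos b - 1)). pose proof (Rabs_pos (exp a - 1)). pose proof (Rabs_pos (sin b)).
  pose proof (Rabs_pos a); pose proof (Rabs_pos b).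
  assert (Rabs (exp a - 1) * Rabs (sin b) <= 3 * Rabs a * Rabs b) by (apply Rmult_le_compat; nra).
  assert (Rabs a * Rabs b <= (a^2 + b^2)/2).
  { pose proof (Rsqr_abs a); pose proof (Rsqr_abs b). unfold Rsqr in *. pose proof (pow2_ge_0 (Rabs a - Rabs b)). nra. }
  assert (exp a * Rabs (cos b - 1) <= 3 * b^2) by (apply Rmult_le_compat; try lra).
  replace (a*(a*1)) with (a^2) by ring. replace (b*(b*1)) with (b^2) by ring. pose proof (pow2_ge_0 a); pose proof (pow2_ge_0 b). lra.
Qed.

Lemma Ex_derive z : is_derive (K:=C_AbsRing) (V:=C_NormedModule) Ex z (Ex z).
Proof.
  apply C_eps_derive. intros eps Heps.
  set (M := exp (fst z)). assert (HM : 0 < M) by apply exp_pos.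
  exists (Rmin 1 (eps / (6 * M))). split.
  { apply Rmin_pos. lra. apply Rdiv_lt_0_compat; lra. }
  intros w Hw. set (h := (w - z)%C).
  assert (Hw' : w = (z + h)%C) by (unfold h; ring).
  rewrite Hw'. rewrite Ex_plus.
  replace (Ex z * Ex h - Ex z - Ex z * h)%C with (Ex z * (Ex h - 1 - h))%C by ring.
  rewrite Cmod_mult, Cmod_Ex. fold M.
  assert (Hh1 : Cmod h <= 1). { unfold h. pose proof (Rmin_l 1 (eps / (6*M))). lra. }
  assert (Hh2 : Cmod h <= eps / (6*M)). { unfold h. pose proof (Rmin_r 1 (eps / (6*M))). lra. }
  pose proof (Ex_small h Hh1). pose proof (Cmod_ge_0 h).
  assert (6 * M * Cmod h <= eps).
  { apply (Rmult_le_compat_l (6*M)) in Hh2. 2: lra.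
    replace (6 * M * (eps / (6 * M))) with eps in Hh2 by (field; lra). lra. }
  assert (M * Cmod (Ex h - 1 - h) <= M * (6 * Cmod h ^ 2)) by (apply Rmult_le_compat_l; lra).
  nra.
Qed.

Lemma cont_eps (g : R -> C) t0 : (forall eps, 0<eps -> exists del, 0<del /\ forall t, Rabs (t - t0) < del -> Cmod (g t - g t0) < eps) -> continuous (T:=R_UniformSpace) (U:=C_R_CompleteNormedModule) g t0.
Proof.
  intros H P [eps HP]. 
  destruct (H (eps / 2)) as [d [Hd1 Hd2]]. pose proof (cond_pos eps); lra.
  exists (mkposreal d Hd1). intros t Ht. apply HP.
  apply (norm_compat1 (V:=C_R_NormedModule)).
  rewrite <- Cmod_norm. eapply Rle_lt_trans. apply Rlt_le. apply Hd2. exact Ht.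
  pose proof (cond_pos eps). lra.
Qed.

Lemma R_eps_derive (g : R -> C) t0 l :
  (forall eps, 0 < eps -> exists del, 0 < del /\ forall t, Rabs (t - t0) < del ->
    Cmod (g t - g t0 - RtoC (t - t0) * l)%C <= eps * Rabs (t - t0)) ->
  is_derive (K:=R_AbsRing) (V:=C_R_NormedModule) g t0 l.
Proof.
  intros H. split.
  - apply is_linear_scal_l.
  - intros x Hx. apply (is_filter_lim_locally_unique (K:=R_AbsRing) (V:=R_NormedModule)) in Hx. subst x.
    intros eps. apply (locally_le_locally_norm (K:=R_AbsRing) (V:=R_NormedModule)).
    destruct (H eps (cond_pos eps)) as [d [Hd1 Hd2]].
    exists (mkposreal d Hd1). intros w Hw.
    pose proof (Hd2 w Hw) as K. rewrite <- scal_R_Cmult in K. rewrite Cmod_norm in K. exact K.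
Qed.

Lemma deriv_cont_eps (f : C -> C) z :
  ex_derive (K:=C_AbsRing) (V:=C_NormedModule) f z ->
  forall eps, 0 < eps -> exists del, 0 < del /\ forall w, Cmod (w - z) < del -> Cmod (f w - f z) < eps.
Proof.
  intros [l Hl] eps Heps. destruct (C_derive_eps f z l Hl 1 Rlt_0_1) as [d [Hd1 Hd2]].
  pose proof (Cmod_ge_0 l).
  exists (Rmin d (eps / (Cmod l + 2))). split.
  { apply Rmin_pos; auto. apply Rdiv_lt_0_compat; lra. }
  intros w Hw. pose proof (Rmin_l d (eps / (Cmod l + 2))). pose proof (Rmin_r d (eps / (Cmod l + 2))).
  specialize (Hd2 w ltac:(lra)).
  replace (f w - f z)%C with ((f w - f z - l * (w - z)) + l * (w - z))%C by ring.
  eapply Rle_lt_trans. apply Cmod_triangle. rewrite Cmod_mult.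
  pose proof (Cmod_ge_0 (w - z)).
  assert (Cmod (w - z) * (Cmod l + 2) < eps).
  { assert (Hw2 : Cmod (w - z) < eps / (Cmod l + 2)) by lra.
    apply (Rmult_lt_compat_r (Cmod l + 2)) in Hw2. 2: lra.
    unfold Rdiv in Hw2. rewrite Rmult_assoc, Rinv_l, Rmult_1_r in Hw2 by lra. exact Hw2. }
  nra.
Qed.

Lemma Cmod_hdiff (t x y : R) : Cmod ((t, y) - (x, y))%C = Rabs (t - x).
Proof.
  replace ((t, y) - (x, y))%C with (RtoC (t - x)).
  apply Cmod_R. unfold Cminus, Cplus, Copp, RtoC; simpl. f_equal; ring.
Qed.
Lemma Cmod_vdiff (t x y : R) : Cmod ((x, t) - (x, y))%C = Rabs (t - y).
Proof.
  replace ((x, t) - (x, y))%C with (Ci * RtoC (t - y))%C.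
  rewrite Cmod_mult, Cmod_Ci, Cmod_R. ring. unfold Cminus, Cplus, Copp, RtoC, Cmult, Ci; simpl. f_equal; ring.
Qed.

Lemma cont_h (G : C -> C) x y : ex_derive (K:=C_AbsRing) (V:=C_NormedModule) G (x,y) ->
  continuous (T:=R_UniformSpace) (U:=C_R_CompleteNormedModule) (fun t : R => G (t, y)) x.
Proof.
  intros H. apply cont_eps. intros eps Heps.
  destruct (deriv_cont_eps G _ H eps Heps) as [d [Hd1 Hd2]]. exists d; split; auto.
  intros t Ht. apply Hd2. rewrite Cmod_hdiff. exact Ht.
Qed.
Lemma cont_v (G : C -> C) x y : ex_derive (K:=C_AbsRing) (V:=C_NormedModule) G (x,y) ->
  continuous (T:=R_UniformSpace) (U:=C_R_CompleteNormedModule) (fun t : R => G (x, t)) y.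
Proof.
  intros H. apply cont_eps. intros eps Heps.
  destruct (deriv_cont_eps G _ H eps Heps) as [d [Hd1 Hd2]]. exists d; split; auto.
  intros t Ht. apply Hd2. rewrite Cmod_vdiff. exact Ht.
Qed.

Lemma deriv_h (G : C -> C) x y l : is_derive (K:=C_AbsRing) (V:=C_NormedModule) G (x,y) l ->
  is_derive (K:=R_AbsRing) (V:=C_R_NormedModule) (fun t : R => G (t, y)) x l.
Proof.
  intros H. apply R_eps_derive. intros eps Heps.
  destruct (C_derive_eps G _ l H eps Heps) as [d [Hd1 Hd2]]. exists d; split; auto.
  intros t Ht. rewrite <- (Cmod_hdiff t x y) in Ht |- *. specialize (Hd2 _ Ht).
  replace (RtoC (t - x) * l)%C with (l * ((t, y) - (x, y)))%C. exact Hd2.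
  unfold Cminus, Cplus, Copp, RtoC, Cmult; simpl. f_equal; ring.
Qed.
Lemma deriv_v (G : C -> C) x y l : is_derive (K:=C_AbsRing) (V:=C_NormedModule) G (x,y) l ->
  is_derive (K:=R_AbsRing) (V:=C_R_NormedModule) (fun t : R => G (x, t)) y (Ci * l)%C.
Proof.
  intros H. apply R_eps_derive. intros eps Heps.
  destruct (C_derive_eps G _ l H eps Heps) as [d [Hd1 Hd2]]. exists d; split; auto.
  intros t Ht. rewrite <- (Cmod_vdiff t x y) in Ht |- *. specialize (Hd2 _ Ht).
  replace (RtoC (t - y) * (Ci * l))%C with (l * ((x, t) - (x, y)))%C. exact Hd2.
  unfold Cminus, Cplus, Copp, RtoC, Cmult, Ci; simpl. f_equal; ring.
Qed.

Definition hI (G : C -> C) (a b y : R) : C := RInt (V:=C_R_CompleteNormedModule) (fun x => G (x, y)) a b.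
Definition vI (G : C -> C) (x c d : R) : C := RInt (V:=C_R_CompleteNormedModule) (fun y => G (x, y)) c d.
Definition bd G a b c d : C := (hI G a b c + Ci * vI G b c d - hI G a b d - Ci * vI G a c d)%C.

Definition holo_rect (G : C -> C) a b c d := forall x y, a <= x <= b -> c <= y <= d ->
  ex_derive (K:=C_AbsRing) (V:=C_NormedModule) G (x,y).

Lemma exh G a b c d y : holo_rect G a b c d -> a <= b -> c <= y <= d ->
  ex_RInt (V:=C_R_CompleteNormedModule) (fun x => G (x, y)) a b.
Proof.
  intros H Hab Hy. apply ex_RInt_continuous. intros z Hz.
  rewrite Rmin_left, Rmax_right in Hz by lra. apply cont_h. apply H; lra.
Qed.
Lemma exv G a b c d x : holo_rect G a b c d -> c <= d -> a <= x <= b ->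
  ex_RInt (V:=C_R_CompleteNormedModule) (fun y => G (x, y)) c d.
Proof.
  intros H Hcd Hx. apply ex_RInt_continuous. intros z Hz.
  rewrite Rmin_left, Rmax_right in Hz by lra. apply cont_v. apply H; lra.
Qed.

Lemma bd_split G a m b c n d : holo_rect G a b c d -> a <= m <= b -> c <= n <= d ->
  bd G a b c d = (bd G a m c n + bd G m b c n + bd G a m n d + bd G m b n d)%C.
Proof.
  intros H Hm Hn. unfold bd, hI, vI.
  assert (Hc : forall y, c <= y <= d -> RInt (V:=C_R_CompleteNormedModule) (fun x => G (x, y)) a b =
     (RInt (V:=C_R_CompleteNormedModule) (fun x => G (x, y)) a m + RInt (V:=C_R_CompleteNormedModule) (fun x => G (x, y)) m b)%C).
  { intros y Hy. symmetry. apply (RInt_Chasles (V:=C_R_CompleteNormedModule)).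
    apply (exh G a m c d); auto. intros x y' ? ?; apply H; lra. lra.
    apply (exh G m b c d); auto. intros x y' ? ?; apply H; lra. lra. }
  assert (Hv : forall x, a <= x <= b -> RInt (V:=C_R_CompleteNormedModule) (fun y => G (x, y)) c d =
     (RInt (V:=C_R_CompleteNormedModule) (fun y => G (x, y)) c n + RInt (V:=C_R_CompleteNormedModule) (fun y => G (x, y)) n d)%C).
  { intros x Hx. symmetry. apply (RInt_Chasles (V:=C_R_CompleteNormedModule)).
    apply (exv G a b c n); auto. intros x' y' ? ?; apply H; lra. lra.
    apply (exv G a b n d); auto. intros x' y' ? ?; apply H; lra. lra. }
  rewrite (Hc c), (Hc d), (Hv a), (Hv b) by lra. ring.
Qed.

Lemma bd_minus G1 G2 a b c d : holo_rect G1 a b c d -> holo_rect G2 a b c d -> a <= b -> c <= d ->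
  bd (fun z => G1 z - G2 z)%C a b c d = (bd G1 a b c d - bd G2 a b c d)%C.
Proof.
  intros H1 H2 Hab Hcd. unfold bd, hI, vI.
  rewrite !(RInt_minus (V:=C_R_CompleteNormedModule) (fun x => G1 (x, _)) (fun x => G2 (x, _))).
  rewrite !(RInt_minus (V:=C_R_CompleteNormedModule) (fun y => G1 (_, y)) (fun y => G2 (_, y))).
  all: try (apply (exh _ a b c d); auto; lra).
  all: try (apply (exv _ a b c d); auto; lra).
  change (@minus C_R_CompleteNormedModule) with Cminus. ring.
Qed.

Lemma is_derive_Cmult_c (P : C -> C) z l k : is_derive (K:=C_AbsRing) (V:=C_NormedModule) P z l ->
  is_derive (K:=C_AbsRing) (V:=C_NormedModule) (fun w => k * P w)%C z (k * l)%C.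
Proof.
  intros H. apply C_eps_derive. intros eps Heps.
  destruct (C_derive_eps P z l H (eps / (Cmod k + 1))) as [d [Hd1 Hd2]].
  { apply Rdiv_lt_0_compat; auto. pose proof (Cmod_ge_0 k); lra. }
  exists d; split; auto. intros w Hw. specialize (Hd2 w Hw).
  replace (k * P w - k * P z - k * l * (w - z))%C with (k * (P w - P z - l * (w - z)))%C by ring.
  rewrite Cmod_mult. pose proof (Cmod_ge_0 k). pose proof (Cmod_ge_0 (w - z)).
  pose proof (Cmod_ge_0 (P w - P z - l * (w - z))%C).
  apply Rle_trans with (Cmod k * (eps / (Cmod k + 1) * Cmod (w - z))).
  apply Rmult_le_compat_l; auto.
  assert (Cmod k * (eps / (Cmod k + 1)) <= eps).
  { unfold Rdiv. apply Rle_trans with ((Cmod k + 1) * (eps * / (Cmod k + 1))).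
    apply Rmult_le_compat_r. left; apply Rmult_lt_0_compat; auto. apply Rinv_0_lt_compat; lra. lra.
    rewrite Rmult_comm, Rmult_assoc, Rinv_l by lra. lra. }
  nra.
Qed.

Lemma bd_prim G P a b c d : a <= b -> c <= d ->
  (forall x y, a <= x <= b -> c <= y <= d -> is_derive (K:=C_AbsRing) (V:=C_NormedModule) P (x,y) (G (x,y))) ->
  holo_rect G a b c d -> bd G a b c d = 0%C.
Proof.
  intros Hab Hcd HP HG.
  assert (Eh : forall y, c <= y <= d -> hI G a b y = (P (b,y) - P (a,y))%C).
  { intros y Hy. unfold hI. apply (is_RInt_unique (V:=C_R_CompleteNormedModule)).
    apply (is_RInt_derive (V:=C_R_CompleteNormedModule) (fun t => P (t, y))).
    - intros t Ht. rewrite Rmin_left, Rmax_right in Ht by lra. apply deriv_h. apply HP; lra.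
    - intros t Ht. rewrite Rmin_left, Rmax_right in Ht by lra. apply cont_h. apply HG; lra. }
  assert (Ev : forall x, a <= x <= b -> (Ci * vI G x c d)%C = (P (x,d) - P (x,c))%C).
  { intros x Hx. unfold vI.
    assert (Hi : is_RInt (V:=C_R_CompleteNormedModule) (fun y => G (x, y)) c d (-Ci * P (x,d) - - Ci * P (x,c))%C).
    { apply (is_RInt_derive (V:=C_R_CompleteNormedModule) (fun t => (-Ci * P (x, t))%C)).
    - intros t Ht. rewrite Rmin_left, Rmax_right in Ht by lra.
      replace (G (x, t)) with (Ci * (- Ci * G (x,t)))%C.
      apply (deriv_v (fun z => (-Ci * P z)%C)). apply is_derive_Cmult_c. apply HP; lra.
      replace (Ci * (- Ci * G (x,t)))%C with (- (Ci * Ci) * G (x,t))%C by ring.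
      replace (Ci * Ci)%C with (RtoC (-1)). 2: { unfold Ci, Cmult, RtoC; simpl. f_equal; ring. }
      ring.
    - intros t Ht. rewrite Rmin_left, Rmax_right in Ht by lra. apply cont_v. apply HG; lra. }
    rewrite (is_RInt_unique (V:=C_R_CompleteNormedModule) _ _ _ _ Hi).
    replace (Ci * (- Ci * P (x, d) - - Ci * P (x, c)))%C with (- (Ci * Ci) * (P (x, d) - P (x, c)))%C by ring.
    replace (Ci * Ci)%C with (RtoC (-1)). 2: { unfold Ci, Cmult, RtoC; simpl. f_equal; ring. }
    ring. }
  unfold bd. rewrite (Eh c), (Eh d), (Ev a), (Ev b) by lra. ring.
Qed.

Lemma affine_derive (al be p z : C) :
  is_derive (K:=C_AbsRing) (V:=C_NormedModule) (fun w => al + be * (w - p))%C z be.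
Proof.
  apply C_eps_derive. intros eps Heps. exists 1. split. lra. intros w _.
  replace (al + be * (w - p) - (al + be * (z - p)) - be * (w - z))%C with (RtoC 0) by ring.
  rewrite Cmod_0. pose proof (Cmod_ge_0 (w - z)). nra.
Qed.

Lemma affine_prim (al be p z : C) :
  is_derive (K:=C_AbsRing) (V:=C_NormedModule) (fun w => al * w + be * (w - p) * (w - p) * (/ RtoC 2))%C z (al + be * (z - p))%C.
Proof.
  apply C_eps_derive. intros eps Heps.
  exists (eps / (Cmod be + 1)). split. apply Rdiv_lt_0_compat; auto. pose proof (Cmod_ge_0 be); lra.
  intros w Hw.
  replace (al * w + be * (w - p) * (w - p) * (/ RtoC 2) - (al * z + be * (z - p) * (z - p) * (/ RtoC 2)) -
    (al + be * (z - p)) * (w - z))%C with (be * (/ RtoC 2) * (w - z) * (w - z))%C by (field; intro HH; injection HH; lra).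
  rewrite !Cmod_mult. rewrite Cmod_inv by (intro HH; injection HH; lra). rewrite Cmod_R, Rabs_pos_eq by lra.
  pose proof (Cmod_ge_0 be). pose proof (Cmod_ge_0 (w - z)).
  assert (Cmod be * Cmod (w - z) <= eps).
  { apply Rle_trans with ((Cmod be + 1) * Cmod (w - z)). nra.
    apply (Rmult_lt_compat_l (Cmod be + 1)) in Hw. 2: lra.
    replace ((Cmod be + 1) * (eps / (Cmod be + 1))) with eps in Hw by (field; lra). lra. }
  nra.
Qed.

Lemma bd_affine al be p a b c d : a <= b -> c <= d ->
  bd (fun w => al + be * (w - p))%C a b c d = 0%C.
Proof.
  intros Hab Hcd. apply (bd_prim _ (fun w => al * w + be * (w - p) * (w - p) * (/ RtoC 2))%C); auto.
  intros; apply affine_prim.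
  intros x y _ _. exists be. apply affine_derive.
Qed.

Lemma bd_bound G a b c d M : a <= b -> c <= d -> holo_rect G a b c d ->
  (forall x y, a <= x <= b -> c <= y <= d -> Cmod (G (x,y)) <= M) ->
  Cmod (bd G a b c d) <= 2 * (b - a) * M + 2 * (d - c) * M.
Proof.
  intros Hab Hcd HG HM.
  assert (Bh : forall y, c <= y <= d -> Cmod (hI G a b y) <= (b - a) * M).
  { intros y Hy. unfold hI. rewrite Cmod_norm.
    apply (norm_RInt_le_const (V:=C_R_NormedModule) (fun x => G (x, y)) a b); auto.
    intros x Hx. rewrite <- Cmod_norm. apply HM; lra.
    apply (RInt_correct (V:=C_R_CompleteNormedModule)). apply (exh G a b c d); auto. }
  assert (Bv : forall x, a <= x <= b -> Cmod (Ci * vI G x c d) <= (d - c) * M).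
  { intros x Hx. rewrite Cmod_mult, Cmod_Ci, Rmult_1_l. unfold vI. rewrite Cmod_norm.
    apply (norm_RInt_le_const (V:=C_R_NormedModule) (fun y => G (x, y)) c d); auto.
    intros y Hy. rewrite <- Cmod_norm. apply HM; lra.
    apply (RInt_correct (V:=C_R_CompleteNormedModule)). apply (exv G a b c d); auto. }
  unfold bd.
  pose proof (Bh c ltac:(lra)). pose proof (Bh d ltac:(lra)). pose proof (Bv a ltac:(lra)). pose proof (Bv b ltac:(lra)).
  pose proof (Cmod_triangle (hI G a b c + Ci * vI G b c d - hI G a b d) (- (Ci * vI G a c d))).
  pose proof (Cmod_triangle (hI G a b c + Ci * vI G b c d) (- hI G a b d)).
  pose proof (Cmod_triangle (hI G a b c) (Ci * vI G b c d)).
  unfold Cminus in *. rewrite Cmod_opp in *. lra.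
Qed.

Lemma pow2_big x : exists n, x < 2 ^ n.
Proof.
  destruct (archimed x) as [H1 _].
  assert (forall n, INR n <= 2 ^ n).
  { induction n. simpl; lra. rewrite S_INR. simpl. assert (1 <= 2^n) by (apply pow_R1_Rle; lra). lra. }
  destruct (Z.lt_ge_cases (up x) 0).
  - exists 0%nat. simpl. match goal with h : (up x < 0)%Z |- _ => apply IZR_lt in h end. simpl in *. lra.
  - exists (Z.to_nat (up x)). specialize (H (Z.to_nat (up x))). rewrite INR_IZR_INZ in H.
    rewrite Z2Nat.id in H by lia. lra.
Qed.

Definition rect := (R * R * R * R)%type.
Definition ra (r : rect) := fst (fst (fst r)).
Definition rb (r : rect) := snd (fst (fst r)).
Definition rc (r : rect) := snd (fst r).
Definition rd (r : rect) := snd r.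
Definition bdr G (r : rect) := bd G (ra r) (rb r) (rc r) (rd r).
Definition q1 (r : rect) : rect := (ra r, (ra r + rb r)/2, rc r, (rc r + rd r)/2).
Definition q2 (r : rect) : rect := ((ra r + rb r)/2, rb r, rc r, (rc r + rd r)/2).
Definition q3 (r : rect) : rect := (ra r, (ra r + rb r)/2, (rc r + rd r)/2, rd r).
Definition q4 (r : rect) : rect := ((ra r + rb r)/2, rb r, (rc r + rd r)/2, rd r).
Definition pick2 (f : rect -> R) x y := if Rle_dec (f x) (f y) then y else x.
Definition step G r := let f := fun r => Cmod (bdr G r) in
  pick2 f (pick2 f (q1 r) (q2 r)) (pick2 f (q3 r) (q4 r)).

Lemma pick2_ge f x y : f x <= f (pick2 f x y) /\ f y <= f (pick2 f x y).
Proof. unfold pick2. destruct (Rle_dec (f x) (f y)); lra. Qed.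
Lemma pick2_P (P : rect -> Prop) f x y : P x -> P y -> P (pick2 f x y).
Proof. unfold pick2. destruct (Rle_dec (f x) (f y)); auto. Qed.

Definition half_of (r r' : rect) :=
  ra r <= ra r' /\ rb r' <= rb r /\ rc r <= rc r' /\ rd r' <= rd r /\
  rb r' - ra r' = (rb r - ra r) / 2 /\ rd r' - rc r' = (rd r - rc r) / 2.

Lemma step_half G r : ra r <= rb r -> rc r <= rd r -> half_of r (step G r).
Proof.
  intros H1 H2. unfold step. repeat apply pick2_P;
  unfold half_of, q1, q2, q3, q4, ra, rb, rc, rd in *; simpl in *; repeat split; lra.
Qed.

Lemma step_bd G r : ra r <= rb r -> rc r <= rd r -> holo_rect G (ra r) (rb r) (rc r) (rd r) ->
  Cmod (bdr G r) <= 4 * Cmod (bdr G (step G r)).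
Proof.
  intros H1 H2 H. unfold bdr at 1.
  rewrite (bd_split G (ra r) ((ra r + rb r)/2) (rb r) (rc r) ((rc r + rd r)/2) (rd r)) by (auto; lra).
  set (f := fun r => Cmod (bdr G r)).
  assert (E1 : Cmod (bd G (ra r) ((ra r + rb r) / 2) (rc r) ((rc r + rd r) / 2)) = f (q1 r)) by reflexivity.
  assert (E2 : Cmod (bd G ((ra r + rb r) / 2) (rb r) (rc r) ((rc r + rd r) / 2)) = f (q2 r)) by reflexivity.
  assert (E3 : Cmod (bd G (ra r) ((ra r + rb r) / 2) ((rc r + rd r) / 2) (rd r)) = f (q3 r)) by reflexivity.
  assert (E4 : Cmod (bd G ((ra r + rb r) / 2) (rb r) ((rc r + rd r) / 2) (rd r)) = f (q4 r)) by reflexivity.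
  destruct (pick2_ge f (q1 r) (q2 r)) as [P1 P2].
  destruct (pick2_ge f (q3 r) (q4 r)) as [P3 P4].
  destruct (pick2_ge f (pick2 f (q1 r) (q2 r)) (pick2 f (q3 r) (q4 r))) as [P5 P6].
  change (Cmod (bdr G (step G r))) with (f (pick2 f (pick2 f (q1 r) (q2 r)) (pick2 f (q3 r) (q4 r)))).
  eapply Rle_trans. apply Cmod_triangle. rewrite E4.
  eapply Rle_trans. apply Rplus_le_compat_r. apply Cmod_triangle. rewrite E3.
  eapply Rle_trans. apply Rplus_le_compat_r. apply Rplus_le_compat_r. apply Cmod_triangle. rewrite E1, E2.
  lra.
Qed.

Lemma nested_point (u v : nat -> R) :
  (forall n, u n <= v n) -> (forall n k, u n <= u (n + k)%nat /\ v (n + k)%nat <= v n) ->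
  exists p, forall n, u n <= p <= v n.
Proof.
  intros Huv Hm.
  assert (Hub : forall m n, u m <= v n).
  { intros m n. destruct (Nat.le_ge_cases m n) as [Hmn|Hmn].
    - replace n with (m + (n - m))%nat by lia. destruct (Hm m (n - m)%nat). specialize (Huv (m + (n-m))%nat). lra.
    - replace m with (n + (m - n))%nat by lia. destruct (Hm n (m - n)%nat). specialize (Huv (n + (m-n))%nat). lra. }
  destruct (completeness (fun x => exists n, x = u n)) as [p [Hp1 Hp2]].
  { exists (v 0%nat). intros x [n ->]. apply Hub. }
  { exists (u 0%nat), 0%nat. reflexivity. }
  exists p. intros n. split.
  - apply Hp1. exists n; reflexivity.
  - apply Hp2. intros x [m ->]. apply Hub.
Qed.

Fixpoint rs G (r0 : rect) n := match n with O => r0 | S n => step G (rs G r0 n) end.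

Lemma rs_props G r0 : ra r0 <= rb r0 -> rc r0 <= rd r0 -> holo_rect G (ra r0) (rb r0) (rc r0) (rd r0) ->
  forall n, ra r0 <= ra (rs G r0 n) /\ rb (rs G r0 n) <= rb r0 /\ rc r0 <= rc (rs G r0 n) /\ rd (rs G r0 n) <= rd r0 /\
   rb (rs G r0 n) - ra (rs G r0 n) = (rb r0 - ra r0) / 2 ^ n /\
   rd (rs G r0 n) - rc (rs G r0 n) = (rd r0 - rc r0) / 2 ^ n /\
   Cmod (bdr G r0) <= 2 ^ n * 2 ^ n * Cmod (bdr G (rs G r0 n)).
Proof.
  intros Hab Hcd HG. induction n.
  - simpl. repeat split; try lra.
  - destruct IHn as (I1 & I2 & I3 & I4 & I5 & I6 & I7).
    assert (P2 : 0 < 2 ^ n) by (apply pow_lt; lra).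
    assert (W1 : 0 <= (rb r0 - ra r0) / 2 ^ n) by (apply Rdiv_le_0_compat; lra).
    assert (W2 : 0 <= (rd r0 - rc r0) / 2 ^ n) by (apply Rdiv_le_0_compat; lra).
    assert (Hh := step_half G (rs G r0 n) ltac:(lra) ltac:(lra)).
    destruct Hh as (J1 & J2 & J3 & J4 & J5 & J6).
    simpl rs. repeat split; try lra.
    + rewrite J5, I5. simpl. field. lra.
    + rewrite J6, I6. simpl. field. lra.
    + assert (HB := step_bd G (rs G r0 n) ltac:(lra) ltac:(lra)).
      assert (HG' : holo_rect G (ra (rs G r0 n)) (rb (rs G r0 n)) (rc (rs G r0 n)) (rd (rs G r0 n))).
      { intros x y Hx Hy. apply HG; lra. }
      specialize (HB HG'). simpl. pose proof (Cmod_ge_0 (bdr G (step G (rs G r0 n)))).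
      assert (0 <= 2^n * 2^n) by nra. nra.
Qed.

Lemma rs_mono G r0 : ra r0 <= rb r0 -> rc r0 <= rd r0 -> holo_rect G (ra r0) (rb r0) (rc r0) (rd r0) ->
  forall n k, ra (rs G r0 n) <= ra (rs G r0 (n + k)) /\ rb (rs G r0 (n + k)) <= rb (rs G r0 n) /\
   rc (rs G r0 n) <= rc (rs G r0 (n + k)) /\ rd (rs G r0 (n + k)) <= rd (rs G r0 n).
Proof.
  intros Hab Hcd HG n k. induction k.
  - rewrite Nat.add_0_r. lra.
  - replace (n + S k)%nat with (S (n + k)) by lia. simpl rs.
    destruct (rs_props G r0 Hab Hcd HG (n + k)) as (I1 & I2 & I3 & I4 & I5 & I6 & I7).
    assert (P2 : 0 < 2 ^ (n+k)) by (apply pow_lt; lra).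
    assert (W1 : 0 <= (rb r0 - ra r0) / 2 ^ (n+k)) by (apply Rdiv_le_0_compat; lra).
    assert (W2 : 0 <= (rd r0 - rc r0) / 2 ^ (n+k)) by (apply Rdiv_le_0_compat; lra).
    destruct (step_half G (rs G r0 (n + k)) ltac:(lra) ltac:(lra)) as (J1 & J2 & J3 & J4 & J5 & J6).
    lra.
Qed.

Lemma holo_minus G1 G2 a b c d : holo_rect G1 a b c d -> holo_rect G2 a b c d ->
  holo_rect (fun w => G1 w - G2 w)%C a b c d.
Proof.
  intros H1 H2 x y Hx Hy. destruct (H1 x y Hx Hy) as [l1 L1]. destruct (H2 x y Hx Hy) as [l2 L2].
  exists (minus l1 l2). apply (is_derive_minus G1 G2); auto.
Qed.

Theorem goursat G a b c d : a <= b -> c <= d -> holo_rect G a b c d -> bd G a b c d = 0%C.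
Proof.
  intros Hab Hcd HG.
  set (r0 := (a, b, c, d) : rect).
  assert (Hab' : ra r0 <= rb r0) by exact Hab.
  assert (Hcd' : rc r0 <= rd r0) by exact Hcd.
  assert (HG' : holo_rect G (ra r0) (rb r0) (rc r0) (rd r0)) by exact HG.
  pose proof (rs_props G r0 Hab' Hcd' HG') as RP.
  pose proof (rs_mono G r0 Hab' Hcd' HG') as RM.
  assert (Wn : forall n, 0 <= (rb r0 - ra r0) / 2 ^ n /\ 0 <= (rd r0 - rc r0) / 2 ^ n).
  { intros n. assert (0 < 2 ^ n) by (apply pow_lt; lra). split; apply Rdiv_le_0_compat; lra. }
  destruct (nested_point (fun n => ra (rs G r0 n)) (fun n => rb (rs G r0 n))) as [px Hpx].
  { intros n. destruct (RP n) as (? & ? & ? & ? & ? & ? & ?). destruct (Wn n). lra. }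
  { intros n k. destruct (RM n k) as (? & ? & ? & ?). lra. }
  destruct (nested_point (fun n => rc (rs G r0 n)) (fun n => rd (rs G r0 n))) as [py Hpy].
  { intros n. destruct (RP n) as (? & ? & ? & ? & ? & ? & ?). destruct (Wn n). lra. }
  { intros n k. destruct (RM n k) as (? & ? & ? & ?). lra. }
  simpl in Hpx, Hpy.
  assert (Hp : a <= px <= b /\ c <= py <= d).
  { destruct (RP 0%nat) as (? & ? & ? & ? & ? & ? & ?). specialize (Hpx 0%nat). specialize (Hpy 0%nat).
    unfold r0, ra, rb, rc, rd in *; simpl in *. lra. }
  destruct (HG px py ltac:(lra) ltac:(lra)) as [l Hl].
  set (WH := (b - a) + (d - c)).
  assert (Hbound : forall eps, 0 < eps -> Cmod (bd G a b c d) <= 2 * eps * WH ^ 2).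
  { intros eps Heps.
    destruct (C_derive_eps G (px, py) l Hl eps Heps) as [del [Hdel1 Hdel2]].
    destruct (pow2_big (WH / del)) as [n Hn].
    assert (P2 : 0 < 2 ^ n) by (apply pow_lt; lra).
    destruct (RP n) as (I1 & I2 & I3 & I4 & I5 & I6 & I7).
    set (rn := rs G r0 n) in *.
    assert (Hsmall : WH / 2 ^ n < del).
    { apply (Rmult_lt_reg_r (2^n)); auto. unfold Rdiv. rewrite Rmult_assoc, Rinv_l by lra.
      apply (Rmult_lt_compat_l del) in Hn; auto. unfold Rdiv in Hn.
      rewrite <- Rmult_assoc, (Rmult_comm del WH), Rmult_assoc, Rinv_r, Rmult_1_r in Hn by lra. lra. }
    set (A := fun w => (G (px, py) + l * (w - (px, py)))%C).
    assert (HGn : holo_rect G (ra rn) (rb rn) (rc rn) (rd rn)).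
    { intros x y Hx Hy. apply HG; unfold r0, ra, rb, rc, rd in *; simpl in *; lra. }
    assert (HAn : holo_rect A (ra rn) (rb rn) (rc rn) (rd rn)).
    { intros x y _ _. exists l. apply affine_derive. }
    assert (Wpos : ra rn <= rb rn /\ rc rn <= rd rn). { destruct (Wn n). lra. }
    assert (Ebd : bdr G rn = bd (fun w => G w - A w)%C (ra rn) (rb rn) (rc rn) (rd rn)).
    { rewrite bd_minus; try tauto. unfold A. rewrite bd_affine by tauto. unfold bdr. ring. }
    assert (Hest : Cmod (bdr G rn) <= 2 * (rb rn - ra rn) * (eps * (WH / 2^n)) + 2 * (rd rn - rc rn) * (eps * (WH / 2^n))).
    { rewrite Ebd. apply bd_bound; try tauto. apply holo_minus; auto.
      intros x y Hx Hy. unfold A.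
      replace (G (x, y) - (G (px, py) + l * ((x, y) - (px, py))))%C with (G (x,y) - G (px,py) - l * ((x,y) - (px,py)))%C by ring.
      specialize (Hpx n); specialize (Hpy n). fold rn in Hpx, Hpy.
      assert (Hd : Cmod ((x, y) - (px, py))%C <= WH / 2 ^ n).
      { replace ((x, y) - (px, py))%C with (x - px, y - py).
        2: { unfold Cminus, Cplus, Copp; simpl. f_equal; ring. }
        eapply Rle_trans. apply Cmod_le_sum.
        assert (WH / 2^n = (b - a) / 2^n + (d - c) / 2^n) by (unfold WH; field; lra).
        unfold r0, ra, rb, rc, rd in I5, I6; simpl in I5, I6. fold rn in I5, I6.
        rewrite H. apply Rplus_le_compat; apply Rabs_le; unfold ra, rb, rc, rd in *; lra. }
      eapply Rle_trans. apply Hdel2. lra. apply Rmult_le_compat_l; lra. }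
    change (rb r0) with b in I5. change (ra r0) with a in I5. change (rd r0) with d in I6. change (rc r0) with c in I6.
    rewrite I5, I6 in Hest. change (bdr G r0) with (bd G a b c d) in I7.
    eapply Rle_trans. apply I7.
    replace (2 * ((b - a) / 2 ^ n) * (eps * (WH / 2 ^ n)) + 2 * ((d - c) / 2 ^ n) * (eps * (WH / 2 ^ n)))
      with (2 * eps * WH ^ 2 / (2^n * 2^n)) in Hest by (unfold WH; field; lra).
    apply (Rmult_le_compat_l (2^n * 2^n)) in Hest. 2: nra.
    replace (2 ^ n * 2 ^ n * (2 * eps * WH ^ 2 / (2 ^ n * 2 ^ n))) with (2 * eps * WH ^ 2) in Hest by (field; lra).
    exact Hest. }
  apply Cmod_eq_0. apply Rle_antisym. 2: apply Cmod_ge_0.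
  destruct (Req_dec WH 0) as [HW|HW].
  - specialize (Hbound 1 Rlt_0_1). rewrite HW in Hbound. lra.
  - apply Rnot_lt_le. intros Hpos.
    set (eps := Cmod (bd G a b c d) / (4 * WH ^ 2)).
    assert (0 < WH ^ 2) by (apply pow_lt; unfold WH in *; lra).
    assert (Heps : 0 < eps) by (apply Rdiv_lt_0_compat; lra).
    specialize (Hbound eps Heps). unfold eps in Hbound.
    replace (2 * (Cmod (bd G a b c d) / (4 * WH ^ 2)) * WH ^ 2) with (Cmod (bd G a b c d) / 2) in Hbound by (field; lra).
    lra.
Qed.

Lemma small_le_all (x : R) : 0 <= x -> (forall eps, 0 < eps -> x <= eps) -> x = 0.
Proof.
  intros H0 H. apply Rle_antisym; auto. apply Rnot_lt_le. intros Hx.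
  specialize (H (x/2) ltac:(lra)). lra.
Qed.

Lemma C_eps_derive2 (f : C -> C) z l :
  (forall eps, 0 < eps -> exists del, 0 < del /\ forall w, Cmod (w - z) < del ->
    Cmod (f w - f z - l * (w - z))%C <= eps * Cmod (w - z)) ->
  is_derive (K:=C_AbsRing) (V:=AbsRing_NormedModule C_AbsRing) f z l.
Proof.
  intros H. split.
  - apply is_linear_scal_l.
  - intros x Hx. apply (is_filter_lim_locally_unique (K:=C_AbsRing) (V:=AbsRing_NormedModule C_AbsRing)) in Hx. subst x.
    intros eps. apply (locally_le_locally_norm (K:=C_AbsRing) (V:=AbsRing_NormedModule C_AbsRing)).
    destruct (H eps (cond_pos eps)) as [d [Hd1 Hd2]].
    exists (mkposreal d Hd1). intros w Hw.
    pose proof (Hd2 w Hw) as K. rewrite (Cmult_comm l) in K. exact K.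
Qed.
Lemma derive_conv (f : C -> C) z l : is_derive (K:=C_AbsRing) (V:=C_NormedModule) f z l ->
  is_derive (K:=C_AbsRing) (V:=AbsRing_NormedModule C_AbsRing) f z l.
Proof. intros H. apply C_eps_derive2. apply C_derive_eps. exact H. Qed.

Lemma Ci_sq : (Ci * Ci)%C = RtoC (-1).
Proof. unfold Ci, Cmult, RtoC; simpl. f_equal; ring. Qed.
Lemma Ci_cancel X : (Ci * X)%C = 0%C -> X = 0%C.
Proof.
  intros H. replace X with (- (Ci * Ci) * X)%C. replace (- (Ci * Ci) * X)%C with (- Ci * (Ci * X))%C by ring.
  rewrite H. ring. rewrite Ci_sq. ring.
Qed.
Lemma Cminus_zero x y : (x - y)%C = 0%C -> x = y.
Proof. intros H. replace x with ((x - y) + y)%C by ring. rewrite H. ring. Qed.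
Lemma Czero_minus x y : x = y -> (x - y)%C = 0%C.
Proof. intros ->. ring. Qed.

Definition circ_int (F : C -> C) (rho : R) : C :=
  RInt (V:=C_R_CompleteNormedModule) (fun t => F (rho * cos t, rho * sin t)) 0 (2*PI).

Lemma Ex_2PI x : Ex (x, 2 * PI) = Ex (x, 0).
Proof. unfold Ex; simpl. rewrite cos_2PI, sin_2PI, cos_0, sin_0. reflexivity. Qed.

Lemma mean_value (F : C -> C) (L : C) :
  (forall w, 0 < Cmod w < 1 -> ex_derive (K:=C_AbsRing) (V:=C_NormedModule) F w) ->
  (forall eps, 0 < eps -> exists del, 0 < del /\ forall w, 0 < Cmod w < del -> Cmod (F w - L) < eps) ->
  forall rho, 0 < rho < 1 -> circ_int F rho = (RtoC (2 * PI) * L)%C.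
Proof.
  intros HF HL rho Hrho.
  set (G := fun z => F (Ex z)).
  assert (HG : forall s1 s2, s1 <= s2 < 0 -> holo_rect G s1 s2 0 (2 * PI)).
  { intros s1 s2 Hs x y Hx Hy. destruct (HF (Ex (x, y))) as [lF HlF].
    { rewrite Cmod_Ex. simpl. split. apply exp_pos. rewrite <- exp_0. apply exp_increasing. lra. }
    exists (scal (Ex (x,y)) lF). apply (is_derive_comp F Ex). exact HlF. apply derive_conv, Ex_derive. }
  set (Phi := fun s => vI G s 0 (2 * PI)).
  assert (Hconst : forall s1 s2, s1 <= s2 < 0 -> Phi s1 = Phi s2).
  { intros s1 s2 Hs. pose proof (goursat G s1 s2 0 (2 * PI) ltac:(lra) ltac:(pose proof PI_RGT_0; lra) (HG s1 s2 Hs)) as E.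
    unfold bd in E.
    assert (Eh : hI G s1 s2 0 = hI G s1 s2 (2 * PI)).
    { unfold hI. apply (RInt_ext (V:=C_R_CompleteNormedModule)). intros x _. unfold G. rewrite Ex_2PI. reflexivity. }
    rewrite Eh in E. unfold Phi.
    assert (E2 : (Ci * (vI G s2 0 (2 * PI) - vI G s1 0 (2 * PI)))%C = 0%C).
    { rewrite <- E. ring. }
    apply Ci_cancel in E2. symmetry. apply Cminus_zero in E2. exact E2. }
  assert (Hrho' : circ_int F rho = Phi (ln rho)).
  { unfold circ_int, Phi, vI. apply (RInt_ext (V:=C_R_CompleteNormedModule)). intros t _. unfold G, Ex; simpl. rewrite exp_ln by lra. reflexivity. }
  rewrite Hrho'. apply Cminus_zero. apply Cmod_eq_0.
  apply small_le_all. apply Cmod_ge_0. intros eps Heps.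
  destruct (HL (eps / (2 * PI))) as [del [Hdel1 Hdel2]].
  { apply Rdiv_lt_0_compat; auto. pose proof PI_RGT_0; lra. }
  set (m := Rmin rho del / 2).
  assert (Hm : 0 < m /\ m < rho /\ m < del).
  { unfold m. pose proof (Rmin_l rho del); pose proof (Rmin_r rho del).
    assert (0 < Rmin rho del) by (apply Rmin_pos; lra). lra. }
  assert (Hs1 : ln m <= ln rho < 0).
  { split. apply Rlt_le, ln_increasing; lra. rewrite <- ln_1. apply ln_increasing; lra. }
  rewrite <- (Hconst (ln m) (ln rho) Hs1).
  unfold Phi, vI.
  assert (Hex : ex_RInt (V:=C_R_CompleteNormedModule) (fun y => G (ln m, y)) 0 (2 * PI)).
  { apply (exv G (ln m) (ln m) 0 (2*PI)). apply HG; lra. pose proof PI_RGT_0; lra. lra. }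
  replace (RtoC (2 * PI) * L)%C with (RInt (V:=C_R_CompleteNormedModule) (fun _ => L) 0 (2 * PI)).
  2: { rewrite RInt_const. rewrite scal_R_Cmult. f_equal. f_equal. ring. }
  change Cminus with (@minus C_R_CompleteNormedModule).
  rewrite <- RInt_minus; auto. 2: apply ex_RInt_const.
  rewrite Cmod_norm.
  apply Rle_trans with ((2 * PI - 0) * (eps / (2 * PI))).
  apply (norm_RInt_le_const (V:=C_R_NormedModule) (fun y => minus (G (ln m, y)) L)).
  pose proof PI_RGT_0; lra.
  - intros t Ht. rewrite <- Cmod_norm. apply Rlt_le. apply Hdel2. unfold G.
    rewrite Cmod_Ex. simpl. rewrite exp_ln by lra. lra.
  - apply (RInt_correct (V:=C_R_CompleteNormedModule)). apply (ex_RInt_minus (V:=C_R_CompleteNormedModule)); auto. apply ex_RInt_const.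
  - right. field. pose proof PI_RGT_0; lra.
Qed.

Lemma C_derive_eps2 (f : C -> C) z l :
  is_derive (K:=C_AbsRing) (V:=AbsRing_NormedModule C_AbsRing) f z l ->
  forall eps, 0 < eps -> exists del, 0 < del /\ forall w, Cmod (w - z) < del ->
    Cmod (f w - f z - l * (w - z))%C <= eps * Cmod (w - z).
Proof.
  intros [_ Hd] eps Heps.
  assert (H := Hd z (fun P H => H) (mkposreal eps Heps)).
  apply (locally_le_locally_norm (K:=C_AbsRing) (V:=AbsRing_NormedModule C_AbsRing)) in H.
  destruct H as [d Hd']. exists d. split. apply cond_pos.
  intros w Hw. specialize (Hd' w).
  unfold ball_norm in Hd'. simpl in Hd'.
  rewrite (Cmult_comm l). exact (Hd' Hw).
Qed.

Lemma derive_back (f : C -> C) z l : is_derive (K:=C_AbsRing) (V:=AbsRing_NormedModule C_AbsRing) f z l ->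
  is_derive (K:=C_AbsRing) (V:=C_NormedModule) f z l.
Proof. intros H. apply C_eps_derive. apply C_derive_eps2. exact H. Qed.

Notation hd f z l := (is_derive (K:=C_AbsRing) (V:=C_NormedModule) f z l).

Lemma hd_mult f g z df dg : hd f z df -> hd g z dg -> hd (fun w => f w * g w)%C z (df * g z + f z * dg)%C.
Proof.
  intros Hf Hg. apply derive_back. apply derive_conv in Hf. apply derive_conv in Hg.
  apply (is_derive_mult f g z df dg Hf Hg). intros; apply Cmult_comm.
Qed.
Lemma hd_plus f g z df dg : hd f z df -> hd g z dg -> hd (fun w => f w + g w)%C z (df + dg)%C.
Proof. intros Hf Hg. apply (is_derive_plus f g z df dg Hf Hg). Qed.
Lemma hd_minus f g z df dg : hd f z df -> hd g z dg -> hd (fun w => f w - g w)%C z (df - dg)%C.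
Proof. intros Hf Hg. apply (is_derive_minus f g z df dg Hf Hg). Qed.
Lemma hd_const (k : C) z : hd (fun _ => k) z (RtoC 0).
Proof. apply (is_derive_const (K:=C_AbsRing) (V:=C_NormedModule) k z). Qed.
Lemma hd_id z : hd (fun w => w) z (RtoC 1).
Proof. apply derive_back. apply (is_derive_id (K:=C_AbsRing) z). Qed.
Lemma hd_ext f g z l : (forall w, f w = g w) -> hd f z l -> hd g z l.
Proof. intros E H. apply (is_derive_ext f g z l); auto. Qed.
Lemma hd_val f z l l' : l = l' -> hd f z l -> hd f z l'.
Proof. intros ->; auto. Qed.

Lemma hd_inv (v : C) : v <> 0%C -> hd Cinv v (- (Cinv v * Cinv v))%C.
Proof.
  intros Hv. apply C_eps_derive. intros eps Heps.
  assert (Hm : 0 < Cmod v) by (apply Cmod_gt_0; auto).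
  exists (Rmin (Cmod v / 2) (eps * Cmod v ^ 3 / 2)). split.
  { apply Rmin_pos. lra. apply Rdiv_lt_0_compat; try lra. apply Rmult_lt_0_compat; auto. apply pow_lt; auto. }
  intros w Hw. pose proof (Rmin_l (Cmod v / 2) (eps * Cmod v ^ 3 / 2)). pose proof (Rmin_r (Cmod v / 2) (eps * Cmod v ^ 3 / 2)).
  assert (Hwv : Cmod v / 2 <= Cmod w).
  { pose proof (Cmod_triangle w (v - w)). replace (w + (v - w))%C with v in H1 by ring.
    replace (v - w)%C with (- (w - v))%C in H1 by ring. rewrite Cmod_opp in H1. lra. }
  assert (Hw0 : w <> 0%C). { intro E. rewrite E, Cmod_0 in Hwv. lra. }
  replace (/ w - / v - - (/ v * / v) * (w - v))%C with ((w - v) * (w - v) * / w * / v * / v)%C by (field; auto).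
  rewrite !Cmod_mult, !Cmod_inv by auto.
  pose proof (Cmod_ge_0 (w - v)).
  assert (Hw1 : / Cmod w <= 2 / Cmod v).
  { apply Rle_trans with (/ (Cmod v / 2)). apply Rinv_le_contravar; lra. right; field; lra. }
  assert (Hd : Cmod (w - v) <= eps * Cmod v ^ 3 / 2) by lra.
  assert (0 < / Cmod v) by (apply Rinv_0_lt_compat; auto).
  assert (0 < / Cmod w) by (apply Rinv_0_lt_compat; lra).
  apply Rle_trans with (Cmod (w - v) * Cmod (w - v) * (2 / Cmod v) * / Cmod v * / Cmod v).
  { repeat apply Rmult_le_compat_r; try lra. apply Rmult_le_compat_l; try lra. nra. }
  apply Rle_trans with (Cmod (w - v) * (eps * Cmod v ^ 3 / 2) * (2 / Cmod v) * / Cmod v * / Cmod v).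
  { repeat apply Rmult_le_compat_r; try lra. apply Rmult_le_compat_l; try lra. }
  right. field. lra.
Qed.

Lemma RInt_fst (h : R -> C) a b : ex_RInt (V:=C_R_CompleteNormedModule) h a b ->
  fst (RInt (V:=C_R_CompleteNormedModule) h a b) = RInt (fun t => fst (h t)) a b.
Proof.
  intros H. symmetry. apply is_RInt_unique.
  apply (is_RInt_fct_extend_fst (U:=R_NormedModule) (V:=R_NormedModule) h a b).
  apply (RInt_correct (V:=C_R_CompleteNormedModule)). exact H.
Qed.
Lemma ex_RInt_fst (h : R -> C) a b : ex_RInt (V:=C_R_CompleteNormedModule) h a b ->
  ex_RInt (fun t => fst (h t)) a b.
Proof. intros [l H]. exists (fst l). apply (is_RInt_fct_extend_fst (U:=R_NormedModule) (V:=R_NormedModule) h a b). exact H. Qed.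
Lemma is_RInt_pair (h : R -> C) a b l1 l2 : is_RInt (fun t => fst (h t)) a b l1 -> is_RInt (fun t => snd (h t)) a b l2 ->
  is_RInt (V:=C_R_CompleteNormedModule) h a b (l1, l2).
Proof. intros H1 H2. apply (is_RInt_fct_extend_pair (U:=R_NormedModule) (V:=R_NormedModule) h a b); auto. Qed.

Definition uc (rho t : R) : C := (rho * cos t, rho * sin t).

Lemma Cmod_uc rho t : 0 <= rho -> Cmod (uc rho t) = rho.
Proof.
  intros H. unfold uc, Cmod; simpl.
  replace (rho * cos t * (rho * cos t * 1) + rho * sin t * (rho * sin t * 1)) with (rho * rho).
  apply sqrt_square; auto. pose proof (sin2_cos2 t). unfold Rsqr in *. nra.
Qed.

Lemma cos_lip s t : Rabs (cos s - cos t) <= Rabs (s - t).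
Proof.
  destruct (MVT_abs cos (fun x => - sin x) t s) as [c [Hc _]].
  intros; apply derivable_pt_lim_cos. rewrite Hc. rewrite Rabs_Ropp.
  rewrite <- (Rmult_1_l (Rabs (s - t))) at 2. apply Rmult_le_compat_r. apply Rabs_pos.
  apply Rabs_le. apply SIN_bound.
Qed.
Lemma sin_lip s t : Rabs (sin s - sin t) <= Rabs (s - t).
Proof.
  destruct (MVT_abs sin cos t s) as [c [Hc _]].
  intros; apply derivable_pt_lim_sin. rewrite Hc.
  rewrite <- (Rmult_1_l (Rabs (s - t))) at 2. apply Rmult_le_compat_r. apply Rabs_pos.
  apply Rabs_le. apply COS_bound.
Qed.

Lemma uc_lip rho s t : 0 <= rho -> Cmod (uc rho s - uc rho t)%C <= 2 * rho * Rabs (s - t).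
Proof.
  intros H. replace (uc rho s - uc rho t)%C with (rho * (cos s - cos t), rho * (sin s - sin t)).
  2: { unfold uc, Cminus, Cplus, Copp; simpl. f_equal; ring. }
  eapply Rle_trans. apply Cmod_le_sum. rewrite !Rabs_mult, Rabs_pos_eq by auto.
  pose proof (cos_lip s t). pose proof (sin_lip s t). nra.
Qed.

Lemma cont_circ (F : C -> C) rho t : 0 <= rho -> ex_derive (K:=C_AbsRing) (V:=C_NormedModule) F (uc rho t) ->
  continuous (T:=R_UniformSpace) (U:=C_R_CompleteNormedModule) (fun s => F (uc rho s)) t.
Proof.
  intros Hr H. apply cont_eps. intros eps Heps.
  destruct (deriv_cont_eps F _ H eps Heps) as [d [Hd1 Hd2]].
  exists (d / (2 * rho + 1)). split. apply Rdiv_lt_0_compat; lra.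
  intros s Hs. apply Hd2. eapply Rle_lt_trans. apply uc_lip; auto.
  apply Rle_lt_trans with ((2 * rho + 1) * Rabs (s - t)). pose proof (Rabs_pos (s - t)). nra.
  apply (Rmult_lt_compat_l (2 * rho + 1)) in Hs. 2: lra.
  replace ((2 * rho + 1) * (d / (2 * rho + 1))) with d in Hs by (field; lra). lra.
Qed.

Lemma ex_circ (F : C -> C) rho : 0 <= rho -> (forall t, ex_derive (K:=C_AbsRing) (V:=C_NormedModule) F (uc rho t)) ->
  ex_RInt (V:=C_R_CompleteNormedModule) (fun t => F (uc rho t)) 0 (2 * PI).
Proof.
  intros Hr H. apply ex_RInt_continuous. intros z _. apply cont_circ; auto.
Qed.

Lemma trig_int a b : is_RInt (fun t => a * cos t + b * sin t) 0 (2 * PI) 0.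
Proof.
  assert (H : is_RInt (fun t => a * cos t + b * sin t) 0 (2 * PI)
     (minus (a * sin (2*PI) - b * cos (2*PI)) (a * sin 0 - b * cos 0))).
  { apply (is_RInt_derive (fun t => a * sin t - b * cos t)).
  - intros x _. apply is_derive_Reals.
    replace (a * cos x + b * sin x) with (a * cos x - b * (- sin x)) by ring.
    apply derivable_pt_lim_minus; apply derivable_pt_lim_scal.
    apply derivable_pt_lim_sin. apply derivable_pt_lim_cos.
  - intros x _. apply (continuous_plus (fun t => a * cos t) (fun t => b * sin t)).
    apply (continuous_scal_r a cos). apply ex_derive_continuous. exists (- sin x). apply is_derive_Reals, derivable_pt_lim_cos.
    apply (continuous_scal_r b sin). apply ex_derive_continuous. exists (cos x). apply is_derive_Reals, derivable_pt_lim_sin. }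
  replace (minus (a * sin (2*PI) - b * cos (2*PI)) (a * sin 0 - b * cos 0)) with 0 in H. exact H.
  rewrite sin_2PI, cos_2PI, sin_0, cos_0. unfold minus, plus, opp; simpl. ring.
Qed.

Lemma RInt_pair0 (h : R -> C) a1 b1 a2 b2 :
  (forall t, h t = (a1 * cos t + b1 * sin t, a2 * cos t + b2 * sin t)) ->
  RInt (V:=C_R_CompleteNormedModule) h 0 (2 * PI) = RtoC 0.
Proof.
  intros E. apply (is_RInt_unique (V:=C_R_CompleteNormedModule)).
  apply is_RInt_pair.
  - apply (is_RInt_ext (fun t => a1 * cos t + b1 * sin t)). intros; rewrite E; reflexivity. apply trig_int.
  - apply (is_RInt_ext (fun t => a2 * cos t + b2 * sin t)). intros; rewrite E; reflexivity. apply trig_int.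
Qed.

Lemma int_Kinv (K : C) rho : 0 < rho -> RInt (V:=C_R_CompleteNormedModule) (fun t => K * Cinv (uc rho t))%C 0 (2 * PI) = RtoC 0.
Proof.
  intros Hr. destruct K as [k1 k2].
  apply (RInt_pair0 _ (k1 / rho) (k2 / rho) (k2 / rho) (- k1 / rho)).
  intros t. unfold uc, Cinv, Cmult; simpl.
  pose proof (sin2_cos2 t). unfold Rsqr in H.
  replace (rho * cos t * (rho * cos t * 1) + rho * sin t * (rho * sin t * 1)) with (rho * rho) by nra. f_equal; field; lra.
Qed.

Notation exd f z := (ex_derive (K:=C_AbsRing) (V:=C_NormedModule) f z).

Lemma exd_mult f g z : exd f z -> exd g z -> exd (fun w => f w * g w)%C z.
Proof. intros [a Ha] [b Hb]. eexists. apply hd_mult; eauto. Qed.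
Lemma exd_plus f g z : exd f z -> exd g z -> exd (fun w => f w + g w)%C z.
Proof. intros [a Ha] [b Hb]. eexists. apply hd_plus; eauto. Qed.
Lemma exd_minus f g z : exd f z -> exd g z -> exd (fun w => f w - g w)%C z.
Proof. intros [a Ha] [b Hb]. eexists. apply hd_minus; eauto. Qed.
Lemma exd_const (k : C) z : exd (fun _ => k) z.
Proof. eexists. apply hd_const. Qed.
Lemma exd_id z : exd (fun w => w) z.
Proof. eexists. apply hd_id. Qed.
Lemma exd_inv (z : C) : z <> (RtoC 0) -> exd Cinv z.
Proof. intros H. eexists. apply hd_inv; auto. Qed.

Lemma Cmod_nz (v : C) : 0 < Cmod v -> v <> (RtoC 0).
Proof. intros H E. rewrite E, Cmod_0 in H. lra. Qed.

Lemma key_identity (om : C) rho t : 0 < rho ->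
  (om * RtoC rho * Cinv (uc rho t) + Cconj om * uc rho t * RtoC (/ rho))%C =
  RtoC (2 * fst (om * Cconj (cos t, sin t))%C).
Proof.
  intros Hr. destruct om as [o1 o2]. unfold uc, Cinv, Cmult, Cplus, Cconj, RtoC; simpl.
  pose proof (sin2_cos2 t). unfold Rsqr in H.
  replace (rho * cos t * (rho * cos t * 1) + rho * sin t * (rho * sin t * 1)) with (rho * rho) by nra.
  f_equal; field_simplify; try lra. 
  all: try (replace (sin t ^ 2) with (1 - cos t ^ 2) by nra; field; lra).
Qed.

Lemma fst_RtoC_mult (z : C) r : fst (z * RtoC r)%C = fst z * r.
Proof. destruct z; unfold Cmult, RtoC; simpl. ring. Qed.

Lemma Cmod_cis t : Cmod (cos t, sin t) = 1.
Proof.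
  unfold Cmod; simpl. replace (cos t * (cos t * 1) + sin t * (sin t * 1)) with 1. apply sqrt_1.
  pose proof (sin2_cos2 t). unfold Rsqr in H. lra.
Qed.

Lemma db_main (psi : C -> C) (d : C) (Hh : forall v, Cmod v < 1 -> exd psi v)
  (Hb : forall v, Cmod v < 1 -> Cmod (psi v) <= 1) (Hd : hd psi (RtoC 0) d) rho : 0 < rho < 1 -> rho * Cmod d ^ 2 <= 2 * Cmod d * (1 - fst (psi (RtoC 0))).
Proof.
  intros Hr.
  set (c := psi (RtoC 0)). set (om := Cconj d).
  set (F := fun v => (om * RtoC rho * (c - psi v) * Cinv v + Cconj om * (v - v * psi v) * RtoC (/ rho))%C).
  set (L := (- (om * RtoC rho * d))%C).
  assert (Hom : Cmod om = Cmod d) by (unfold om; apply Cmod_conj).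
  assert (MVF : circ_int F rho = (RtoC (2 * PI) * L)%C).
  { apply mean_value; auto.
    - intros w Hw. unfold F. apply exd_plus. apply exd_mult. apply exd_mult. apply exd_const.
      apply exd_minus. apply exd_const. apply Hh; lra. apply exd_inv. apply Cmod_nz; lra.
      apply exd_mult. apply exd_mult. apply exd_const. apply exd_minus. apply exd_id.
      apply exd_mult. apply exd_id. apply Hh; lra. apply exd_const.
    - intros eps Heps.
      set (B := Cmod om + 1).
      assert (HB : 0 < B) by (unfold B; pose proof (Cmod_ge_0 om); lra).
      destruct (C_derive_eps psi (RtoC 0) d Hd (eps / (2 * B * rho))) as [d1 [Hd1 Hd2]].
      { apply Rdiv_lt_0_compat; auto. nra. }
      exists (Rmin 1 (Rmin d1 (eps * rho / (4 * B)))). split.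
      { apply Rmin_pos; try lra. apply Rmin_pos; auto. apply Rdiv_lt_0_compat; nra. }
      intros w [Hw0 Hw].
      pose proof (Rmin_l 1 (Rmin d1 (eps * rho / (4 * B)))). pose proof (Rmin_r 1 (Rmin d1 (eps * rho / (4 * B)))).
      pose proof (Rmin_l d1 (eps * rho / (4 * B))). pose proof (Rmin_r d1 (eps * rho / (4 * B))).
      assert (Hw0' : w <> (RtoC 0)) by (apply Cmod_nz; lra).
      specialize (Hd2 w). replace (w - 0)%C with w in Hd2 by ring.
      specialize (Hd2 ltac:(lra)).
      assert (E : (F w - L)%C = (om * RtoC rho * (- ((psi w - psi (RtoC 0) - d * w) * Cinv w)) + Cconj om * (w - w * psi w) * RtoC (/ rho))%C).
      { unfold F, L, c. field. auto. }
      rewrite E. eapply Rle_lt_trans. apply Cmod_triangle.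
      rewrite !Cmod_mult, Cmod_opp, Cmod_mult, Cmod_inv, Cmod_conj, !Cmod_R by auto.
      rewrite (Rabs_pos_eq rho) by lra. rewrite (Rabs_pos_eq (/ rho)) by (left; apply Rinv_0_lt_compat; lra).
      assert (T1 : Cmod (psi w - psi (RtoC 0) - d * w) * / Cmod w <= eps / (2 * B * rho)).
      { apply (Rmult_le_reg_r (Cmod w)). lra. rewrite Rmult_assoc, Rinv_l, Rmult_1_r by lra. lra. }
      assert (T2 : Cmod (w - w * psi w) <= 2 * Cmod w).
      { replace (w - w * psi w)%C with (w * (1 - psi w))%C by ring. rewrite Cmod_mult.
        pose proof (Cmod_triangle 1 (- psi w)). rewrite Cmod_opp, Cmod_1 in H3.
        pose proof (Hb w ltac:(lra)). unfold Cminus. pose proof (Cmod_ge_0 (1 + - psi w)%C). nra. }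
      pose proof (Cmod_ge_0 om). pose proof (Cmod_ge_0 (psi w - psi (RtoC 0) - d * w)%C).
      assert (0 <= / Cmod w) by (left; apply Rinv_0_lt_compat; lra).
      assert (A1 : Cmod om * rho * (Cmod (psi w - psi (RtoC 0) - d * w) * / Cmod w) <= eps / 2).
      { apply Rle_trans with (B * rho * (eps / (2 * B * rho))).
        apply Rmult_le_compat; try nra. unfold B; nra.
        right. field. lra. }
      assert (A2 : Cmod om * Cmod (w - w * psi w) * / rho < eps / 2).
      { apply Rle_lt_trans with (B * (2 * Cmod w) * / rho).
        apply Rmult_le_compat_r. left; apply Rinv_0_lt_compat; lra.
        apply Rmult_le_compat; try nra. pose proof (Cmod_ge_0 (w - w * psi w)%C). lra. unfold B; lra.
        apply (Rmult_lt_reg_r rho). lra. rewrite Rmult_assoc, Rinv_l, Rmult_1_r by lra.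
        assert (HH9 : Cmod w < eps * rho / (4 * B)) by lra.
        apply (Rmult_lt_compat_l (2 * B)) in HH9. 2: lra.
        replace (2 * B * (eps * rho / (4 * B))) with (eps / 2 * rho) in HH9 by (field; lra). lra. }
      lra. }
  assert (MVpsi : circ_int psi rho = (RtoC (2 * PI) * c)%C).
  { apply mean_value; auto.
    - intros w Hw. apply Hh; lra.
    - intros eps Heps. destruct (deriv_cont_eps psi (RtoC 0) (Hh (RtoC 0) ltac:(rewrite Cmod_0; lra)) eps Heps) as [d1 [Hd1 Hd2]].
      exists d1. split; auto. intros w [_ Hw]. apply Hd2. replace (w - 0)%C with w by ring. auto. }
  set (K := (om * RtoC rho * (1 - c))%C).
  set (Hf := fun t => (F (uc rho t) + K * Cinv (uc rho t))%C).
  assert (Huc : forall t, Cmod (uc rho t) = rho) by (intros; apply Cmod_uc; lra).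
  assert (exF : ex_RInt (V:=C_R_CompleteNormedModule) (fun t => F (uc rho t)) 0 (2 * PI)).
  { apply ex_circ. lra. intros t. unfold F. rewrite <- (Huc t) in Hr.
    apply exd_plus. apply exd_mult. apply exd_mult. apply exd_const.
      apply exd_minus. apply exd_const. apply Hh; lra. apply exd_inv. apply Cmod_nz; lra.
      apply exd_mult. apply exd_mult. apply exd_const. apply exd_minus. apply exd_id.
      apply exd_mult. apply exd_id. apply Hh; lra. apply exd_const. }
  assert (exK : ex_RInt (V:=C_R_CompleteNormedModule) (fun t => K * Cinv (uc rho t))%C 0 (2 * PI)).
  { apply (ex_circ (fun v => K * Cinv v)%C). lra. intros t. rewrite <- (Huc t) in Hr.
    apply exd_mult. apply exd_const. apply exd_inv. apply Cmod_nz; lra. }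
  assert (exH : ex_RInt (V:=C_R_CompleteNormedModule) Hf 0 (2 * PI)).
  { apply (ex_RInt_plus (V:=C_R_CompleteNormedModule)); auto. }
  assert (IH : RInt (V:=C_R_CompleteNormedModule) Hf 0 (2 * PI) = (RtoC (2 * PI) * L)%C).
  { unfold Hf. rewrite (RInt_plus (V:=C_R_CompleteNormedModule)); auto.
    rewrite int_Kinv by lra. change (RInt (V:=C_R_CompleteNormedModule) (fun t => F (uc rho t)) 0 (2 * PI)) with (circ_int F rho).
    rewrite MVF. apply (Cplus_0_r (RtoC (2 * PI) * L)). }
  assert (Hpt : forall t, Hf t = ((1 - psi (uc rho t)) * RtoC (2 * fst (om * Cconj (cos t, sin t))%C))%C).
  { intros t. rewrite <- (key_identity om rho t) by lra. unfold Hf, F, K. ring. }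
  assert (Hlow : forall t, - 2 * Cmod om * (1 - fst (psi (uc rho t))) <= fst (Hf t)).
  { intros t. rewrite Hpt. rewrite fst_RtoC_mult.
    assert (R1 : 0 <= fst (1 - psi (uc rho t))%C).
    { simpl. pose proof (re_le_Cmod (psi (uc rho t))). pose proof (Hb (uc rho t) ltac:(rewrite Huc; lra)).
      pose proof (Rle_abs (fst (psi (uc rho t)))). unfold Re in *. simpl in *. lra. }
    assert (R2 : - Cmod om <= fst (om * Cconj (cos t, sin t))%C).
    { pose proof (re_le_Cmod (om * Cconj (cos t, sin t))%C). rewrite Cmod_mult, Cmod_conj, Cmod_cis in H.
      unfold Re in H. apply Rabs_le_between in H. lra. }
    assert (E1 : fst (1 - psi (uc rho t))%C = 1 - fst (psi (uc rho t))) by (simpl; ring).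
    rewrite E1 in *. nra. }
  assert (exf : ex_RInt (fun t => fst (psi (uc rho t))) 0 (2 * PI)).
  { apply ex_RInt_fst. apply ex_circ. lra. intros t. apply Hh. rewrite Huc; lra. }
  assert (Ile : RInt (fun t => - 2 * Cmod om * (1 - fst (psi (uc rho t)))) 0 (2 * PI) <= RInt (fun t => fst (Hf t)) 0 (2 * PI)).
  { apply RInt_le. pose proof PI_RGT_0; lra.
    apply (ex_RInt_scal (V:=R_CompleteNormedModule) (fun t => 1 - fst (psi (uc rho t))) 0 (2*PI) (-2 * Cmod om)).
    apply (ex_RInt_minus (V:=R_CompleteNormedModule)). apply ex_RInt_const. exact exf.
    apply ex_RInt_fst. exact exH. intros; apply Hlow. }
  rewrite <- RInt_fst in Ile by exact exH. rewrite IH in Ile.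
  rewrite (RInt_scal (V:=R_CompleteNormedModule) (fun t => 1 - fst (psi (uc rho t)))) in Ile.
  2: { apply (ex_RInt_minus (V:=R_CompleteNormedModule)). apply ex_RInt_const. exact exf. }
  rewrite (RInt_minus (V:=R_CompleteNormedModule) (fun _ => 1)) in Ile; auto. 2: apply ex_RInt_const.
  rewrite RInt_const in Ile. rewrite <- RInt_fst in Ile. 2: { apply ex_circ. lra. intros t. apply Hh. rewrite Huc; lra. }
  change (RInt (V:=C_R_CompleteNormedModule) (fun t => psi (uc rho t)) 0 (2 * PI)) with (circ_int psi rho) in Ile.
  rewrite MVpsi in Ile.
  unfold L, om in Ile. unfold scal, minus, plus, opp in Ile; simpl in Ile. unfold mult in Ile; simpl in Ile.
  rewrite Cmod_conj in Ile.
  assert (Ed : Cmod d ^ 2 = fst d * fst d + snd d * snd d) by (rewrite Cmod_sq; ring).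
  pose proof PI_RGT_0.
  apply (Rmult_le_reg_l (2 * PI)). lra.
  replace (2 * PI * (rho * Cmod d ^ 2)) with (2 * PI * rho * (fst d * fst d + snd d * snd d)) by (rewrite Ed; ring).
  lra.
Qed.

Lemma deriv_bound0 (psi : C -> C) d :
  (forall v, Cmod v < 1 -> exd psi v) ->
  (forall v, Cmod v < 1 -> Cmod (psi v) <= 1) ->
  hd psi (RtoC 0) d -> Cmod d <= 2 * Cmod (1 - psi (RtoC 0)).
Proof.
  intros Hh Hb Hd.
  assert (Hre : 1 - fst (psi (RtoC 0)) <= Cmod (1 - psi (RtoC 0))%C).
  { pose proof (re_le_Cmod (1 - psi (RtoC 0))%C). unfold Re in H. simpl in H.
    pose proof (Rle_abs (1 + - fst (psi (RtoC 0)))). lra. }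
  pose proof (Cmod_ge_0 d) as Hd0.
  destruct (Req_dec (Cmod d) 0) as [Z|NZ].
  { rewrite Z. pose proof (Cmod_ge_0 (1 - psi (RtoC 0))%C). lra. }
  assert (Hall : forall rho, 0 < rho < 1 -> rho * Cmod d <= 2 * Cmod (1 - psi (RtoC 0))).
  { intros rho Hr. pose proof (db_main psi d Hh Hb Hd rho Hr).
    apply (Rmult_le_reg_r (Cmod d)). lra. nra. }
  apply Rnot_lt_le. intros Hlt.
  set (M := 2 * Cmod (1 - psi (RtoC 0))).
  assert (0 <= M) by (unfold M; pose proof (Cmod_ge_0 (1 - psi (RtoC 0))%C); lra).
  set (rho := (M / Cmod d + 1) / 2).
  assert (Hr1 : M / Cmod d < 1).
  { apply (Rmult_lt_reg_r (Cmod d)). lra. unfold Rdiv. rewrite Rmult_assoc, Rinv_l by lra. fold M in Hlt. lra. }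
  assert (Hr0 : 0 <= M / Cmod d) by (apply Rdiv_le_0_compat; lra).
  specialize (Hall rho ltac:(unfold rho; lra)). fold M in Hall.
  assert (M / Cmod d < rho) by (unfold rho; lra).
  apply (Rmult_lt_compat_r (Cmod d)) in H0. 2: lra.
  unfold Rdiv in H0. rewrite Rmult_assoc, Rinv_l, Rmult_1_r in H0 by lra. lra.
Qed.

Lemma hd_comp f g z df dg : hd f (g z) df -> hd g z dg -> hd (fun x => f (g x)) z (dg * df)%C.
Proof.
  intros Hf Hg. apply derive_conv in Hg. apply (is_derive_comp f g z df dg Hf Hg).
Qed.

Lemma deriv_bound (phi : C -> C) w l :
  (forall v, Cmod v < 1 -> exd phi v) ->
  (forall v, Cmod v < 1 -> Cmod (phi v) <= 1) ->
  Cmod w < 1 -> hd phi w l -> Cmod l * (1 - Cmod w) <= 2 * Cmod (1 - phi w).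
Proof.
  intros Hh Hb Hw Hl.
  set (s := 1 - Cmod w). assert (Hs : 0 < s) by (unfold s; lra).
  set (g := fun v => (w + RtoC s * v)%C).
  assert (Hg : forall v, Cmod v < 1 -> Cmod (g v) < 1).
  { intros v Hv. unfold g. eapply Rle_lt_trans. apply Cmod_triangle. rewrite Cmod_mult, Cmod_R, Rabs_pos_eq by lra.
    pose proof (Cmod_ge_0 v). unfold s. nra. }
  assert (Hgd : forall v, hd g v (RtoC s)).
  { intros v. unfold g. assert (E : (RtoC 0 + (RtoC 0 * v + RtoC s * RtoC 1))%C = RtoC s) by ring.
    apply (hd_val _ _ _ _ E). apply hd_plus. apply hd_const. apply hd_mult. apply hd_const. apply hd_id. }
  assert (H0 : g (RtoC 0) = w) by (unfold g; ring).
  assert (Hd : hd (fun v => phi (g v)) (RtoC 0) (RtoC s * l)%C).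
  { apply hd_comp. rewrite H0. exact Hl. apply Hgd. }
  pose proof (deriv_bound0 (fun v => phi (g v)) (RtoC s * l)%C) as DB.
  simpl in DB. rewrite H0 in DB. rewrite Cmod_mult, Cmod_R, Rabs_pos_eq in DB by lra.
  rewrite Rmult_comm. apply DB.
  - intros v Hv. destruct (Hh (g v) (Hg v Hv)) as [lf Hlf]. eexists. apply hd_comp. exact Hlf. apply Hgd.
  - intros v Hv. apply Hb. apply Hg; auto.
  - exact Hd.
Qed.

Lemma R_eps_derivable (f : R -> R) t l :
  (forall eps, 0 < eps -> exists del, 0 < del /\ forall s, Rabs (s - t) < del -> Rabs (f s - f t - l * (s - t)) <= eps * Rabs (s - t)) ->
  derivable_pt_lim f t l.
Proof.
  intros H eps Heps. destruct (H (eps / 2)) as [d [Hd1 Hd2]]. lra.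
  exists (mkposreal d Hd1). intros h Hh0 Hhd. simpl in Hhd.
  specialize (Hd2 (t + h)). replace (t + h - t) with h in Hd2 by ring. specialize (Hd2 Hhd).
  replace ((f (t + h) - f t) / h - l) with ((f (t + h) - f t - l * h) / h) by (field; auto).
  unfold Rdiv. rewrite Rabs_mult, Rabs_inv.
  assert (0 < Rabs h) by (apply Rabs_pos_lt; auto).
  apply (Rmult_le_compat_r (/ Rabs h)) in Hd2. 2: left; apply Rinv_0_lt_compat; auto.
  rewrite Rmult_assoc, Rinv_r, Rmult_1_r in Hd2 by lra. lra.
Qed.

Lemma sqnorm_deriv (G : R -> C) t a :
  (forall eps, 0 < eps -> exists del, 0 < del /\ forall s, Rabs (s - t) < del ->
     Cmod (G s - G t - RtoC (s - t) * a)%C <= eps * Rabs (s - t)) ->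
  derivable_pt_lim (fun s => Cmod (G s) ^ 2) t (2 * fst (Cconj (G t) * a)%C).
Proof.
  intros H. apply R_eps_derivable. intros eps Heps.
  set (M := Cmod (G t) + Cmod a + 2).
  assert (HM : 2 <= M) by (unfold M; pose proof (Cmod_ge_0 (G t)); pose proof (Cmod_ge_0 a); lra).
  set (m := Rmin 1 (eps / (8 * M))).
  assert (Hm0 : 0 < m) by (unfold m; apply Rmin_pos; [lra| apply Rdiv_lt_0_compat; lra]).
  assert (Hm1 : m <= 1) by (unfold m; apply Rmin_l).
  assert (HmM : m * M <= eps / 8).
  { apply Rle_trans with (eps / (8 * M) * M). apply Rmult_le_compat_r. lra. unfold m; apply Rmin_r. right; field; lra. }
  destruct (H m Hm0) as [d [Hd1 Hd2]].
  exists (Rmin d (eps / (16 * M * M))). split. apply Rmin_pos; auto. apply Rdiv_lt_0_compat; nra.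
  intros s Hs. pose proof (Rmin_l d (eps / (16 * M * M))). pose proof (Rmin_r d (eps / (16 * M * M))).
  specialize (Hd2 s ltac:(lra)).
  assert (HhM : Rabs (s - t) * (4 * M * M) <= eps / 4).
  { apply Rle_trans with (eps / (16 * M * M) * (4 * M * M)). apply Rmult_le_compat_r. nra. lra. right; field; lra. }
  set (e := (G s - G t - RtoC (s - t) * a)%C) in Hd2.
  assert (Gs : G s = (G t + RtoC (s - t) * a + e)%C) by (unfold e; ring).
  pose proof (Rabs_pos (s - t)) as Hst.
  set (h := s - t) in *. cbv beta.
  assert (CM1 : Cmod (G t) <= M) by (unfold M; pose proof (Cmod_ge_0 a); lra).
  assert (CM2 : Cmod a <= M) by (unfold M; pose proof (Cmod_ge_0 (G t)); lra).
  rewrite Gs. clearbody e. destruct (G t) as [g1 g2]. destruct a as [a1 a2]. destruct e as [e1 e2].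
  assert (Eq : Cmod ((g1,g2) + RtoC h * (a1,a2) + (e1,e2))%C ^ 2 - Cmod (g1,g2) ^ 2 - 2 * fst (Cconj (g1,g2) * (a1,a2))%C * h
     = 2 * (g1 * e1 + g2 * e2) + ((h * a1 + e1) ^ 2 + (h * a2 + e2) ^ 2)).
  { rewrite !Cmod_sq. unfold Cconj, Cmult, Cplus, RtoC; simpl. ring. }
  rewrite Eq.
  pose proof (Cmod_fst (e1,e2)) as He1. pose proof (Cmod_snd (e1,e2)) as He2. simpl in He1, He2.
  pose proof (Cmod_fst (g1,g2)) as Hg1. pose proof (Cmod_snd (g1,g2)) as Hg2. simpl in Hg1, Hg2.
  pose proof (Cmod_fst (a1,a2)) as Ha1. pose proof (Cmod_snd (a1,a2)) as Ha2. simpl in Ha1, Ha2.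
  assert (E1 : Rabs e1 <= m * Rabs h) by lra. assert (E2 : Rabs e2 <= m * Rabs h) by lra.
  assert (HhM1 : Rabs h * 1 <= Rabs h * M) by (apply Rmult_le_compat_l; lra).
  assert (Q1 : Rabs (h * a1 + e1) <= Rabs h * (2 * M)).
  { eapply Rle_trans. apply Rabs_triang. rewrite Rabs_mult.
    assert (Rabs h * Rabs a1 <= Rabs h * M) by (apply Rmult_le_compat_l; lra).
    assert (m * Rabs h <= 1 * Rabs h) by (apply Rmult_le_compat_r; lra). lra. }
  assert (Q2 : Rabs (h * a2 + e2) <= Rabs h * (2 * M)).
  { eapply Rle_trans. apply Rabs_triang. rewrite Rabs_mult.
    assert (Rabs h * Rabs a2 <= Rabs h * M) by (apply Rmult_le_compat_l; lra).
    assert (m * Rabs h <= 1 * Rabs h) by (apply Rmult_le_compat_r; lra). lra. }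
  assert (Q3 : Rabs (g1 * e1 + g2 * e2) <= 2 * M * (m * Rabs h)).
  { eapply Rle_trans. apply Rabs_triang. rewrite !Rabs_mult.
    assert (Rabs g1 * Rabs e1 <= M * (m * Rabs h)) by (apply Rmult_le_compat; try apply Rabs_pos; lra).
    assert (Rabs g2 * Rabs e2 <= M * (m * Rabs h)) by (apply Rmult_le_compat; try apply Rabs_pos; lra). lra. }
  assert (S1 : (h * a1 + e1) ^ 2 <= Rabs h * (Rabs h * (4 * M * M))).
  { rewrite <- pow2_abs. pose proof (Rabs_pos (h * a1 + e1)).
    apply Rle_trans with ((Rabs h * (2 * M)) ^ 2). apply pow_incr; lra. right; ring. }
  assert (S2 : (h * a2 + e2) ^ 2 <= Rabs h * (Rabs h * (4 * M * M))).
  { rewrite <- pow2_abs. pose proof (Rabs_pos (h * a2 + e2)).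
    apply Rle_trans with ((Rabs h * (2 * M)) ^ 2). apply pow_incr; lra. right; ring. }
  assert (S3 : Rabs h * (Rabs h * (4 * M * M)) <= Rabs h * (eps / 4)) by (apply Rmult_le_compat_l; lra).
  assert (S4 : 2 * M * (m * Rabs h) <= Rabs h * (eps / 4)).
  { replace (2 * M * (m * Rabs h)) with (Rabs h * (2 * (m * M))) by ring. apply Rmult_le_compat_l; lra. }
  eapply Rle_trans. apply Rabs_triang. rewrite Rabs_mult, (Rabs_pos_eq 2) by lra.
  rewrite (Rabs_pos_eq ((h * a1 + e1) ^ 2 + (h * a2 + e2) ^ 2)) by (pose proof (pow2_ge_0 (h * a1 + e1)); pose proof (pow2_ge_0 (h * a2 + e2)); lra).
  lra.
Qed.

Lemma harnack (phi : C -> C) r z :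
  (forall v, Cmod v < 1 -> exd phi v) -> (forall v, Cmod v < 1 -> Cmod (phi v) <= 1) ->
  0 <= r < 1 -> Cmod z <= r -> Cmod (1 - phi z)%C <= exp (2 / (1 - r)) * Cmod (1 - phi (RtoC 0))%C.
Proof.
  intros Hh Hb Hr Hz.
  set (k := 4 / (1 - r)).
  assert (Hk : 0 < k) by (unfold k; apply Rdiv_lt_0_compat; lra).
  set (G := fun t : R => (1 - phi (RtoC t * z))%C).
  set (l := fun t : R => C_derive phi (RtoC t * z)%C).
  assert (Htz : forall t, 0 <= t <= 1 -> Cmod (RtoC t * z)%C <= r).
  { intros t Ht. rewrite Cmod_mult, Cmod_R, Rabs_pos_eq by lra. pose proof (Cmod_ge_0 z). nra. }
  assert (Hl : forall t, 0 <= t <= 1 -> hd phi (RtoC t * z)%C (l t)).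
  { intros t Ht. apply C_derive_correct. exact z. apply Hh. pose proof (Htz t Ht). lra. }
  set (V := fun t => Cmod (G t) ^ 2).
  set (V' := fun t => 2 * fst (Cconj (G t) * (- (l t * z)))%C).
  assert (HV : forall t, 0 <= t <= 1 -> derivable_pt_lim V t (V' t)).
  { intros t Ht. apply sqnorm_deriv. intros eps Heps.
    destruct (C_derive_eps phi _ _ (Hl t Ht) eps Heps) as [d [Hd1 Hd2]].
    exists (d / (Cmod z + 1)). split. apply Rdiv_lt_0_compat; auto. pose proof (Cmod_ge_0 z); lra.
    intros s Hs.
    assert (E : (RtoC s * z - RtoC t * z)%C = (RtoC (s - t) * z)%C) by (rewrite RtoC_minus; ring).
    assert (Hm : Cmod (RtoC s * z - RtoC t * z)%C < d).
    { rewrite E, Cmod_mult, Cmod_R. pose proof (Cmod_ge_0 z). pose proof (Rabs_pos (s - t)).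
      apply Rle_lt_trans with (Rabs (s - t) * (Cmod z + 1)). nra.
      apply (Rmult_lt_compat_r (Cmod z + 1)) in Hs. 2: lra.
      replace (d / (Cmod z + 1) * (Cmod z + 1)) with d in Hs by (field; lra). exact Hs. }
    specialize (Hd2 _ Hm). rewrite E, Cmod_mult, Cmod_R in Hd2.
    unfold G.
    replace (1 - phi (RtoC s * z) - (1 - phi (RtoC t * z)) - RtoC (s - t) * - (l t * z))%C
      with (- (phi (RtoC s * z) - phi (RtoC t * z) - l t * (RtoC (s - t) * z)))%C by (rewrite RtoC_minus; ring).
    rewrite Cmod_opp. eapply Rle_trans. exact Hd2.
    pose proof (Rabs_pos (s - t)). assert (Cmod z <= 1) by lra. apply Rmult_le_compat_l. lra. rewrite <- (Rmult_1_r (Rabs (s - t))) at 2. apply Rmult_le_compat_l; lra. }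
  assert (HV'b : forall t, 0 <= t <= 1 -> V' t <= k * V t).
  { intros t Ht. unfold V', V.
    pose proof (re_le_Cmod (Cconj (G t) * - (l t * z))%C). unfold Re in H.
    rewrite Cmod_mult, Cmod_conj, Cmod_opp, Cmod_mult in H.
    pose proof (deriv_bound phi (RtoC t * z)%C (l t) Hh Hb ltac:(pose proof (Htz t Ht); lra) (Hl t Ht)) as DB.
    fold (G t) in DB.
    pose proof (Htz t Ht). pose proof (Cmod_ge_0 (G t)). pose proof (Cmod_ge_0 (l t)). pose proof (Cmod_ge_0 z).
    assert (Hlt : Cmod (l t) * (1 - r) <= 2 * Cmod (G t)).
    { eapply Rle_trans. 2: exact DB. apply Rmult_le_compat_l; lra. }
    assert (Hl2 : Cmod (l t) <= 2 * Cmod (G t) / (1 - r)).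
    { apply (Rmult_le_reg_r (1 - r)). lra. unfold Rdiv. rewrite Rmult_assoc, Rinv_l by lra. lra. }
    pose proof (Rle_abs (fst (Cconj (G t) * - (l t * z))%C)).
    assert (Cmod (G t) * (Cmod (l t) * Cmod z) <= Cmod (G t) * (2 * Cmod (G t) / (1 - r) * 1)).
    { apply Rmult_le_compat_l; auto. apply Rmult_le_compat; lra. }
    unfold k. replace (4 / (1 - r) * Cmod (G t) ^ 2) with (2 * (Cmod (G t) * (2 * Cmod (G t) / (1 - r) * 1))) by (field; lra).
    lra. }
  set (W := fun t => V t * exp (- k * t)).
  set (W' := fun t => V' t * exp (- k * t) + V t * (- k * exp (- k * t))).
  assert (HW : forall t, 0 <= t <= 1 -> derivable_pt_lim W t (W' t)).
  { intros t Ht. apply is_derive_Reals.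
    assert (D1 : is_derive V t (V' t)) by (apply is_derive_Reals; apply HV; auto).
    assert (D2 : is_derive (fun t => exp (- k * t)) t (- k * exp (- k * t))) by (auto_derive; auto; ring).
    exact (is_derive_mult V (fun t => exp (- k * t)) t _ _ D1 D2 Rmult_comm). }
  destruct (MVT_cor2 W W' 0 1 Rlt_0_1 HW) as [c [Hc1 Hc2]].
  assert (W' c <= 0).
  { unfold W'. pose proof (HV'b c ltac:(lra)). pose proof (exp_pos (- k * c)). nra. }
  assert (HW1 : W 1 <= W 0) by nra.
  unfold W in HW1. rewrite Rmult_0_r, exp_0, Rmult_1_r, Rmult_1_r in HW1.
  unfold V, G in HW1. replace (RtoC 1 * z)%C with z in HW1 by ring. replace (RtoC 0 * z)%C with (RtoC 0) in HW1 by ring.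
  set (A := Cmod (1 - phi z)%C) in *. set (B := Cmod (1 - phi (RtoC 0))%C) in *.
  assert (E2 : exp (2 / (1 - r)) ^ 2 = exp k).
  { simpl. rewrite Rmult_1_r, <- exp_plus. f_equal. unfold k. field. lra. }
  assert (HA : A ^ 2 <= (exp (2 / (1 - r)) * B) ^ 2).
  { rewrite Rpow_mult_distr, E2. apply (Rmult_le_reg_r (exp (- k))). apply exp_pos.
    replace (exp k * B ^ 2 * exp (- k)) with (B ^ 2 * (exp k * exp (- k))) by ring. rewrite <- exp_plus. replace (k + - k) with 0 by ring. rewrite exp_0. lra. }
  pose proof (Cmod_ge_0 (1 - phi z)%C). pose proof (Cmod_ge_0 (1 - phi (RtoC 0))%C).
  pose proof (exp_pos (2 / (1 - r))).
  fold A B in H1, H2.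
  apply Rnot_lt_le. intros Hc. assert (0 <= exp (2 / (1 - r)) * B) by nra. nra.
Qed.

Lemma seq_small (a : nat -> R) eps : is_lim_seq a 0 -> 0 < eps -> exists N, forall n, (N <= n)%nat -> Rabs (a n) < eps.
Proof.
  intros H He. apply is_lim_seq_spec in H. destruct (H (mkposreal eps He)) as [N HN].
  exists N. intros n Hn. specialize (HN n Hn). simpl in HN. rewrite Rminus_0_r in HN. exact HN.
Qed.

Lemma series_tail_small (M : nat -> R) : ex_series M ->
  forall eps, 0 < eps -> exists N0, forall N, (N0 <= N)%nat -> Rabs (Series (fun k => M (S N + k)%nat)) < eps.
Proof.
  intros HM eps He.
  pose proof (Series_correct M HM) as HS. apply is_series_Reals in HS.
  destruct (HS eps He) as [N0 HN0]. exists N0. intros N HN.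
  specialize (HN0 N HN). unfold R_dist in HN0.
  rewrite (Series_incr_n M (S N)) in HN0 by (auto; lia). simpl in HN0.
  replace (sum_f_R0 M N - (sum_f_R0 M N + Series (fun k => M (S (N + k))))) with (- Series (fun k => M (S (N + k)))) in HN0 by ring.
  rewrite Rabs_Ropp in HN0. exact HN0.
Qed.

Lemma mtest (b : nat -> C -> R) (M : nat -> R) (r : R) (N1 : nat) :
  (forall n z, 0 <= b n z) -> (forall n z, (N1 <= n)%nat -> Cmod z <= r -> b n z <= M n) -> ex_series M ->
  exists g : C -> R, forall eps, 0 < eps -> exists N0, forall N, (N0 <= N)%nat -> forall z, Cmod z <= r ->
    Rabs (sum_f_R0 (fun n => b n z) N - g z) < eps.
Proof.
  intros Hb0 HbM HM.
  exists (fun z => Series (fun n => b n z)).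
  intros eps He. destruct (series_tail_small M HM eps He) as [N0 HN0].
  exists (max N0 N1). intros N HN z Hz.
  assert (Hex : ex_series (fun n => b n z)).
  { apply (ex_series_incr_n _ N1). apply (ex_series_le (K:=R_AbsRing) (V:=R_CompleteNormedModule) _ (fun k => M (N1 + k)%nat)).
    intros n. unfold norm; simpl. unfold abs; simpl. rewrite Rabs_pos_eq by apply Hb0. apply HbM; auto. lia.
    apply (ex_series_incr_n M N1). exact HM. }
  rewrite (Series_incr_n (fun n => b n z) (S N)) by (auto; lia). simpl.
  replace (sum_f_R0 (fun n => b n z) N - (sum_f_R0 (fun n => b n z) N + Series (fun k => b (S (N + k)) z)))
    with (- Series (fun k => b (S (N + k)) z)) by ring.
  rewrite Rabs_Ropp. specialize (HN0 N ltac:(lia)).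
  assert (Hle : Series (fun k => b (S (N + k)) z) <= Series (fun k => M (S (N + k)))).
  { apply Series_le. intros n. split. apply Hb0. apply HbM; auto. lia.
    apply (ex_series_incr_n M (S N)). exact HM. }
  assert (H0 : 0 <= Series (fun k => b (S (N + k)) z)).
  { assert (Z : Series (fun _ : nat => 0) = 0).
    { rewrite (Series_ext (fun _ => 0) (fun n => 0 * b n z)) by (intros; ring). rewrite Series_scal_l. ring. }
    rewrite <- Z. apply Series_le. intros n. split. lra. apply Hb0.
    apply (ex_series_incr_n (fun n => b n z) (S N)). exact Hex. }
  rewrite Rabs_pos_eq by exact H0. eapply Rle_lt_trans. exact Hle.
  eapply Rle_lt_trans. apply Rle_abs. exact HN0.
Qed.

Lemma sqrt2_bounds : 1.4 <= sqrt 2 <= 1.5.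
Proof.
  pose proof (sqrt_sqrt 2 ltac:(lra)). pose proof (sqrt_pos 2). split; nra.
Qed.

Lemma Cmod_1mi : Cmod (1 - Ci)%C = sqrt 2.
Proof. unfold Cmod, Ci, Cminus, Cplus, Copp; simpl. f_equal. ring. Qed.
Lemma Cmod_1pi : Cmod (1 + Ci)%C = sqrt 2.
Proof. unfold Cmod, Ci, Cplus; simpl. f_equal. ring. Qed.

Lemma T_id w : (1 + Ci * w)%C <> RtoC 0 -> (1 - T w)%C = ((1 - Ci) * (1 - w) / (1 + Ci * w))%C.
Proof.
  intros H. unfold T, Cdiv.
  replace (1 - Ci * (1 - Ci * w) * / (1 + Ci * w))%C with ((1 + Ci * w - Ci * (1 - Ci * w)) * / (1 + Ci * w))%C by (field; auto).
  f_equal. replace (1 + Ci * w - Ci * (1 - Ci * w))%C with (1 + Ci * w - Ci + (Ci * Ci) * w)%C by ring.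
  rewrite Ci_sq. ring.
Qed.

Lemma Cmod_1pw w : Cmod (1 + Ci * w)%C <= 1 + Cmod w.
Proof. eapply Rle_trans. apply Cmod_triangle. rewrite Cmod_1, Cmod_mult, Cmod_Ci. lra. Qed.

Lemma T_lower w : Cmod w <= 1 -> Cmod (1 - w)%C <= 2 * Cmod (1 - T w)%C.
Proof.
  intros Hw. pose proof sqrt2_bounds.
  destruct (Ceq_dec (1 + Ci * w)%C (RtoC 0)) as [E|E].
  - assert (Ew : w = Ci).
    { replace w with (- (Ci * Ci) * w)%C by (rewrite Ci_sq; ring).
      replace (- (Ci * Ci) * w)%C with (- Ci * (1 + Ci * w) + Ci)%C by ring. rewrite E. ring. }
    assert (ET : T w = RtoC 0).
    { unfold T, Cdiv. rewrite E. unfold Cinv, RtoC, Cmult; simpl. f_equal; unfold Rdiv; ring. }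
    rewrite ET, Ew, Cmod_1mi. replace (1 - RtoC 0)%C with (RtoC 1) by ring. rewrite Cmod_1. lra.
  - rewrite T_id by auto. unfold Cdiv. rewrite !Cmod_mult, Cmod_inv, Cmod_1mi by auto.
    pose proof (Cmod_1pw w). assert (0 < Cmod (1 + Ci * w)%C) by (apply Cmod_gt_0; auto).
    pose proof (Cmod_ge_0 (1 - w)%C).
    assert (Cmod (1 - w)%C * / Cmod (1 + Ci * w)%C >= Cmod (1 - w)%C / 2).
    { unfold Rdiv. apply Rle_ge. apply Rmult_le_compat_l; auto. apply Rinv_le_contravar; lra. }
    nra.
Qed.

Lemma T_upper w : Cmod (1 - w)%C <= 1 / 2 -> Cmod (1 - T w)%C <= 2 * Cmod (1 - w)%C.
Proof.
  intros Hw. pose proof sqrt2_bounds.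
  assert (HD : 0.9 <= Cmod (1 + Ci * w)%C).
  { pose proof (Cmod_triangle (1 + Ci * w)%C (Ci * (1 - w))%C). rewrite Cmod_mult, Cmod_Ci in H0.
    replace ((1 + Ci * w) + Ci * (1 - w))%C with (1 + Ci)%C in H0 by ring. rewrite Cmod_1pi in H0. lra. }
  assert (E : (1 + Ci * w)%C <> RtoC 0). { intro E. rewrite E, Cmod_0 in HD. lra. }
  rewrite T_id by auto. unfold Cdiv. rewrite !Cmod_mult, Cmod_inv, Cmod_1mi by auto.
  pose proof (Cmod_ge_0 (1 - w)%C).
  assert (/ Cmod (1 + Ci * w)%C <= / 0.9) by (apply Rinv_le_contravar; lra).
  assert (sqrt 2 * Cmod (1 - w)%C * / Cmod (1 + Ci * w)%C <= 1.5 * Cmod (1 - w)%C * / 0.9).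
  { apply Rmult_le_compat. nra. left; apply Rinv_0_lt_compat; lra. apply Rmult_le_compat_r; lra. auto. }
  lra.
Qed.

Lemma unif_to_abs (w : nat -> C -> C) : prod_abs_loc_unif_conv w -> prod_abs_conv (fun n => w n (RtoC 0)).
Proof.
  intros H. destruct (H 0 ltac:(lra)) as [g Hg].
  exists (g (RtoC 0)). apply is_series_Reals. intros eps He.
  destruct (Hg eps He) as [N0 HN0]. exists N0. intros n Hn. unfold R_dist.
  apply (HN0 n Hn). rewrite Cmod_0. lra.
Qed.

Lemma ex_series_2 (a : nat -> R) : ex_series a -> ex_series (fun n => 2 * a n).
Proof. intros H. apply (ex_series_scal_l (K:=R_AbsRing) (V:=R_NormedModule) 2 a H). Qed.

Theorem lemma4p3 (phi : nat -> C -> C)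
  (Hinner : forall n, inner (phi n))
  (Hnz : forall n, phi n 0 <> RtoC 0)
  (Hnoti : forall n, ~ (forall z, in_disk z -> phi n z = Ci)) :
  let f := fun n z => T (phi n z) in
  (prod_abs_conv (fun n => phi n 0) <-> prod_abs_loc_unif_conv phi) /\
  (prod_abs_loc_unif_conv phi <-> prod_abs_conv (fun n => f n 0)) /\
  (prod_abs_conv (fun n => f n 0) <-> prod_abs_loc_unif_conv f).
Proof.
  intros f.
  assert (Hh : forall n v, Cmod v < 1 -> exd (phi n) v).
  { intros n v Hv. destruct (Hinner n) as [Hhol _]. apply Hhol. exact Hv. }
  assert (Hb : forall n v, Cmod v < 1 -> Cmod (phi n v) <= 1).
  { intros n v Hv. destruct (Hinner n) as [_ [Hbd _]]. apply Hbd. exact Hv. }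
  assert (Harn : forall n r z, 0 <= r < 1 -> Cmod z <= r ->
     Cmod (1 - phi n z)%C <= exp (2 / (1 - r)) * Cmod (1 - phi n (RtoC 0))%C).
  { intros n r z Hr Hz. apply harnack; auto. }
  assert (H0D : Cmod (RtoC 0) < 1) by (rewrite Cmod_0; lra).
  assert (AB : prod_abs_conv (fun n => phi n (RtoC 0)) -> prod_abs_loc_unif_conv phi).
  { intros Ha r Hr. set (K := exp (2 / (1 - r))).
    apply (mtest (fun n z => Cmod (1 - phi n z)%C) (fun n => K * Cmod (1 - phi n (RtoC 0))%C) r 0).
    - intros; apply Cmod_ge_0.
    - intros n z _ Hz. apply Harn; auto.
    - apply (ex_series_scal_l (K:=R_AbsRing) (V:=R_NormedModule) K _ Ha). }
  assert (AC : prod_abs_conv (fun n => phi n (RtoC 0)) -> prod_abs_conv (fun n => f n (RtoC 0))).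
  { intros Ha. pose proof (ex_series_lim_0 _ Ha) as Hl.
    destruct (seq_small _ (1/2) Hl ltac:(lra)) as [N HN].
    unfold prod_abs_conv. apply (ex_series_incr_n _ N).
    apply (ex_series_le (K:=R_AbsRing) (V:=R_CompleteNormedModule) _ (fun k => 2 * Cmod (1 - phi (N + k)%nat (RtoC 0))%C)).
    - intros k. unfold norm; simpl. unfold abs; simpl. rewrite Rabs_pos_eq by apply Cmod_ge_0.
      unfold f. apply T_upper. specialize (HN (N + k)%nat ltac:(lia)). rewrite Rabs_pos_eq in HN by apply Cmod_ge_0. lra.
    - apply ex_series_2. apply (ex_series_incr_n (fun n => Cmod (1 - phi n (RtoC 0))%C) N). exact Ha. }
  assert (CA : prod_abs_conv (fun n => f n (RtoC 0)) -> prod_abs_conv (fun n => phi n (RtoC 0))).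
  { intros Hc. unfold prod_abs_conv.
    apply (ex_series_le (K:=R_AbsRing) (V:=R_CompleteNormedModule) _ (fun n => 2 * Cmod (1 - f n (RtoC 0))%C)).
    - intros n. unfold norm; simpl. unfold abs; simpl. rewrite Rabs_pos_eq by apply Cmod_ge_0.
      unfold f. apply T_lower. apply Hb; auto.
    - apply ex_series_2. exact Hc. }
  assert (CD : prod_abs_conv (fun n => phi n (RtoC 0)) -> prod_abs_loc_unif_conv f).
  { intros Ha r Hr. set (K := exp (2 / (1 - r))).
    assert (HK : 0 < K) by apply exp_pos.
    pose proof (ex_series_lim_0 _ Ha) as Hl.
    destruct (seq_small _ (1 / (2 * K)) Hl) as [N1 HN1].
    { apply Rdiv_lt_0_compat; lra. }
    apply (mtest (fun n z => Cmod (1 - f n z)%C) (fun n => 2 * (K * Cmod (1 - phi n (RtoC 0))%C)) r N1).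
    - intros; apply Cmod_ge_0.
    - intros n z Hn Hz. unfold f. 
      assert (H1 : Cmod (1 - phi n z)%C <= K * Cmod (1 - phi n (RtoC 0))%C) by (apply Harn; auto).
      specialize (HN1 n Hn). rewrite Rabs_pos_eq in HN1 by apply Cmod_ge_0.
      assert (K * Cmod (1 - phi n (RtoC 0))%C <= 1 / 2).
      { apply Rle_trans with (K * (1 / (2 * K))). apply Rmult_le_compat_l; lra. right; field; lra. }
      eapply Rle_trans. apply T_upper. lra. lra.
    - apply ex_series_2. apply (ex_series_scal_l (K:=R_AbsRing) (V:=R_NormedModule) K _ Ha). }
  split; [|split].
  - split. exact AB. apply unif_to_abs.
  - split. intros Hb'. apply AC. apply unif_to_abs. exact Hb'.
    intros Hc. apply AB. apply CA. exact Hc.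
  - split. intros Hc. apply CD. apply CA. exact Hc.
    apply unif_to_abs.
Qed.
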